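(* Consider the two-tubes TFE equations (defined in the context). There exist exactly two propagating terraces consisting of two traveling waves connecting $(-1,-1)$ to $(1,1)$ (traveling wave profiles counted up to translation of the variable $y-vt$). In both, the speeds are $v_1^*=-1/4$ and $v_2^*=1/4$; the intermediate state is $\sigma_1=(1/2,-1/2)$ for one of them and $\sigma_1=(-1/2,1/2)$ for the other. That is, the terraces are $\sigma_0=(-1,-1)\to\sigma_1\to\sigma_2=(1,1)$ with $\sigma_1\in\{(1/2,-1/2),(-1/2,1/2)\}$.
   Context: Two-tubes TFE equations: unknowns $c_1,c_2$, real functions of $(t,y)\in[0,\infty)\times\mathbb{R}$, satisfying $$\partial_t c_1+\partial_y(u_1c_1)-\partial_{yy}c_1=-f,\qquad \partial_t c_2+\partial_y(u_2c_2)-\partial_{yy}c_2=f,$$ with $u_1=(c_2-c_1)/2$, $u_2=-u_1$, and $f=-(\partial_y u_1)\,c_1$ if $\partial_y u_1\le 0$, $f=-(\partial_y u_1)\,c_2$ if $\partial_y u_1\ge0$. A traveling wave with speed $v$ connecting $g_-,g_+\in\mathbb{R}^2$ is a solution of the form $(c_1,c_2)(t,y)=\tilde g(y-vt)$ with $\tilde g:\mathbb{R}\to\mathbb{R}^2$ continuous (and smooth enough to solve the equations classically), $\tilde g(-\infty)=g_-$, $\tilde g(+\infty)=g_+$. A propagating terrace connecting $\alpha$ to $\beta$ ($\alpha,\beta\in\mathbb{R}^2$) is a pair of finite sequences $(\sigma_k)_{0\le k\le N}$, $(g_k)_{1\le k\le N}$ with each $\sigma_k\in\mathbb{R}^2$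 a stationary (constant) solution, $\sigma_0=\alpha$, $\sigma_N=\beta$, each $g_k$ a traveling wave connecting $\sigma_{k-1}$ to $\sigma_k$ with speed $v_k$, and $v_1\le\dots\le v_N$. ''Two traveling waves'' means $N=2$. *)

(* Defs.v *)
From Stdlib Require Import Reals.
From Coquelicot Require Import Coquelicot.
Open Scope R_scope.

Definition field := R -> R -> R.

Definition d_t (c : field) (t y : R) : R := Derive (fun s => c s y) t.
Definition d_y (c : field) (t y : R) : R := Derive (fun z => c t z) y.
Definition d_yy (c : field) (t y : R) : R := Derive_n (fun z => c t z) 2 y.

Definition u1 (c1 c2 : field) : field := fun t y => (c2 t y - c1 t y) / 2.
Definition u2 (c1 c2 : field) : field := fun t y => - u1 c1 c2 t y.

(* f = -(d_y u1) c1 if d_y u1 <= 0, and -(d_y u1) c2 otherwise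
   (both branches agree when d_y u1 = 0). *)
Definition reaction (c1 c2 : field) (t y : R) : R :=
  let d := d_y (u1 c1 c2) t y in
  if Rle_dec d 0 then - d * c1 t y else - d * c2 t y.

Definition classical_regular (c : field) : Prop :=
  forall t, 0 <= t ->
    (forall y, ex_derive (fun s => c s y) t) /\
    (forall y, ex_derive (fun z => c t z) y) /\
    (forall y, ex_derive (Derive (fun z => c t z)) y).

Definition TFE_solution (c1 c2 : field) : Prop :=
  classical_regular c1 /\ classical_regular c2 /\
  forall t y, 0 <= t ->
    d_t c1 t y + d_y (fun t z => u1 c1 c2 t z * c1 t z) t y - d_yy c1 t y
      = - reaction c1 c2 t y /\
    d_t c2 t y + d_y (fun t z => u2 c1 c2 t z * c2 t z) t y - d_yy c2 t y
      = reaction c1 c2 t y.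

Definition stationary (s : R * R) : Prop :=
  TFE_solution (fun _ _ => fst s) (fun _ _ => snd s).

Definition traveling_wave (g1 g2 : R -> R) (v : R) (gm gp : R * R) : Prop :=
  (forall x, continuous g1 x) /\ (forall x, continuous g2 x) /\
  is_lim g1 m_infty (fst gm) /\ is_lim g2 m_infty (snd gm) /\
  is_lim g1 p_infty (fst gp) /\ is_lim g2 p_infty (snd gp) /\
  TFE_solution (fun t y => g1 (y - v * t)) (fun t y => g2 (y - v * t)).

Definition terrace2 (alpha s1 beta : R * R) (v1 v2 : R)
  (g1 g2 h1 h2 : R -> R) : Prop :=
  stationary alpha /\ stationary s1 /\ stationary beta /\
  traveling_wave g1 g2 v1 alpha s1 /\ traveling_wave h1 h2 v2 s1 beta /\
  v1 <= v2.

Definition same_up_to_translation (g1 g2 k1 k2 : R -> R) : Prop :=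
  exists a : R, forall x, k1 x = g1 (x + a) /\ k2 x = g2 (x + a).

(* Main.v *)
Require Import Defs.
From Stdlib Require Import Reals Lra.
From Coquelicot Require Import Coquelicot.
Open Scope R_scope.

Lemma abs_le x y : Rabs x <= y -> -y <= x <= y.
Proof. unfold Rabs; destruct (Rcase_abs x); lra. Qed.
Lemma abs_lt x y : Rabs x < y -> -y < x < y.
Proof. unfold Rabs; destruct (Rcase_abs x); lra. Qed.
Lemma le_abs x y : -y <= x <= y -> Rabs x <= y.
Proof. unfold Rabs; destruct (Rcase_abs x); lra. Qed.
Lemma lt_abs x y : -y < x < y -> Rabs x < y.
Proof. unfold Rabs; destruct (Rcase_abs x); lra. Qed.

Lemma Deq (f : R -> R) (x a b : R) : is_derive f x a -> a = b -> is_derive f x b.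
Proof. intros H E; subst; exact H. Qed.
Lemma Dplus (f g : R -> R) (x a b : R) : is_derive f x a -> is_derive g x b -> is_derive (fun y => f y + g y) x (a + b).
Proof. intros H H0. exact (is_derive_plus f g x a b H H0). Qed.
Lemma Dminus (f g : R -> R) (x a b : R) : is_derive f x a -> is_derive g x b -> is_derive (fun y => f y - g y) x (a - b).
Proof. intros H H0. rewrite is_derive_Reals in *. exact (derivable_pt_lim_minus f g x a b H H0). Qed.
Lemma Dmult (f g : R -> R) (x a b : R) : is_derive f x a -> is_derive g x b -> is_derive (fun y => f y * g y) x (a * g x + f x * b).
Proof. intros H H0. rewrite is_derive_Reals in *. exact (derivable_pt_lim_mult f g x a b H H0). Qed.
Lemma Dcomp (f g : R -> R) (x a b : R) : is_derive f (g x) a -> is_derive g x b -> is_derive (fun y => f (g y)) x (b * a).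
Proof. intros H H0. exact (is_derive_comp f g x a b H H0). Qed.
Lemma Dconst (c x : R) : is_derive (fun _ => c) x 0.
Proof. exact (is_derive_const c x). Qed.
Lemma Did (x : R) : is_derive (fun y => y) x 1.
Proof. exact (is_derive_id x). Qed.
Lemma Dscal (c : R) (f : R -> R) (x a : R) : is_derive f x a -> is_derive (fun y => c * f y) x (c * a).
Proof. intros H. eapply Deq. apply (Dmult (fun _ => c) f x 0 a (Dconst c x) H). ring. Qed.
Lemma Dopp (f : R -> R) (x a : R) : is_derive f x a -> is_derive (fun y => - f y) x (- a).
Proof. intros H. eapply Deq. eapply is_derive_ext. 2: apply (Dscal (-1)); exact H. intros; simpl; ring. simpl; ring. Qed.
Lemma Dsq (f : R -> R) (x a : R) : is_derive f x a -> is_derive (fun y => f y ^ 2) x (2 * f x * a).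
Proof. intros H. eapply is_derive_ext. 2: eapply Deq. 2: apply (Dmult _ _ _ _ _ H H). intros; simpl; ring. ring. Qed.
Lemma Dext (f g : R -> R) (x a : R) : (forall y, f y = g y) -> is_derive f x a -> is_derive g x a.
Proof. intros E H. exact (is_derive_ext f g x a E H). Qed.

Lemma deriv_cont (f : R -> R) x l : is_derive f x l -> continuity_pt f x.
Proof. intros H. rewrite is_derive_Reals in H. apply derivable_continuous_pt. exists l. exact H. Qed.

Lemma cont_eps (f : R -> R) x : continuity_pt f x -> forall e, 0 < e -> exists d, 0 < d /\ forall y, Rabs (y - x) < d -> Rabs (f y - f x) < e.
Proof.
  intros H e He. destruct (H e He) as [d [Hd Hy]]. exists d. split; auto.
  intros y Hyx. destruct (Req_dec y x) as [->|Hne].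
  - rewrite Rminus_diag, Rabs_R0; auto.
  - apply (Hy y). split. split. exact I. auto. exact Hyx.
Qed.

Lemma MVTd (f f' : R -> R) a b : (forall x, is_derive f x (f' x)) -> a < b -> exists c, a <= c <= b /\ f b - f a = f' c * (b - a).
Proof.
  intros H Hab. destruct (MVT_gen f a b f') as [c [Hc E]].
  - intros; apply H.
  - intros; eapply deriv_cont; apply H.
  - exists c. rewrite Rmin_left in Hc by lra. rewrite Rmax_right in Hc by lra. auto.
Qed.

Lemma const_zero (f : R -> R) : (forall x, is_derive f x 0) -> forall x y, f x = f y.
Proof.
  intros H x y. destruct (Rtotal_order x y) as [Hl|[->|Hl]]; auto.
  - destruct (MVTd f (fun _ => 0) x y H Hl) as [c [_ E]]. lra.
  - destruct (MVTd f (fun _ => 0) y x H Hl) as [c [_ E]]. lra.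
Qed.

Lemma mono (f f' : R -> R) : (forall x, is_derive f x (f' x)) -> (forall x, 0 <= f' x) -> forall x y, x <= y -> f x <= f y.
Proof.
  intros H Hp x y Hxy. destruct (Req_dec x y) as [->|Hne]; [lra|].
  destruct (MVTd f f' x y H) as [c [_ E]]. lra. specialize (Hp c). nra.
Qed.

Lemma right_gt (f : R -> R) t l a : is_derive f t l -> a <= f t -> (f t = a -> 0 < l) ->
  exists e, 0 < e /\ forall s, t < s < t + e -> a < f s.
Proof.
  intros H Ha Hl. destruct (Req_dec (f t) a) as [E|Ne].
  - specialize (Hl E). rewrite is_derive_Reals in H.
    destruct (H l Hl) as [d Hd]. exists d. split. apply cond_pos.
    intros s Hs. specialize (Hd (s - t)).
    assert (Hne : s - t <> 0) by lra. assert (Hlt : Rabs (s - t) < d) by (rewrite Rabs_right; lra).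
    specialize (Hd Hne Hlt). replace (t + (s - t)) with s in Hd by ring.
    apply Rabs_def2 in Hd. destruct Hd as [_ Hd].
    assert (0 < (f s - f t) / (s - t)) by lra.
    assert (0 < f s - f t). { replace (f s - f t) with ((f s - f t) / (s - t) * (s - t)) by (field; lra). apply Rmult_lt_0_compat; lra. }
    lra.
  - assert (Hc := deriv_cont _ _ _ H). destruct (cont_eps _ _ Hc (f t - a)) as [d [Hd Hy]]. lra.
    exists d. split; auto. intros s Hs. specialize (Hy s). assert (Rabs (s - t) < d) by (rewrite Rabs_right; lra).
    specialize (Hy H0). apply Rabs_def2 in Hy. lra.
Qed.

Lemma barrier (h : R -> R) (x0 a : R) :
  a <= h x0 ->
  (forall t, x0 <= t -> h t < a -> exists d, 0 < d /\ forall s, Rabs (s - t) < d -> h s < a) ->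
  (forall t, x0 <= t -> a <= h t -> exists e, 0 < e /\ forall s, t < s < t + e -> a <= h s) ->
  forall y, x0 <= y -> a <= h y.
Proof.
  intros H0 Hlow Hup y Hy. destruct (Rle_lt_dec a (h y)) as [ok|Hya]; auto. exfalso.
  set (E := fun t => x0 <= t <= y /\ a <= h t).
  assert (Hb : bound E). { exists y. intros t [[_ Ht] _]; auto. }
  assert (Hex : exists t, E t). { exists x0. split; [lra|auto]. }
  destruct (completeness E Hb Hex) as [s [Hub Hlub]].
  assert (Hx0s : x0 <= s). { apply Hub. split; [lra|auto]. }
  assert (Hsy : s <= y). { apply Hlub. intros t [[_ Ht] _]; auto. }
  assert (Hhs : a <= h s).
  { destruct (Rle_lt_dec a (h s)) as [ok|Hlt]; auto.
    destruct (Hlow s Hx0s Hlt) as [d [Hd Hs]].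
    assert (s <= s - d/2); [|lra]. apply Hlub. intros t Et. destruct (Rle_lt_dec t (s - d/2)) as [ok|Hgt]; auto.
    assert (t <= s) by (apply Hub; auto). destruct Et as [_ Ht].
    assert (Rabs (t - s) < d) by (rewrite Rabs_left1; lra). specialize (Hs t H1). lra. }
  assert (Hsy' : s < y). { destruct Hsy as [?|E']; auto. subst. lra. }
  destruct (Hup s Hx0s Hhs) as [e [He Hs]].
  set (t := Rmin (s + e/2) y).
  assert (Ht1 : s < t). { unfold t. apply Rmin_glb_lt; lra. }
  assert (Ht2 : t <= y) by (unfold t; apply Rmin_r).
  assert (Ht3 : t <= s + e/2) by (unfold t; apply Rmin_l).
  assert (E t). { split. lra. apply Hs. lra. }
  assert (t <= s) by (apply Hub; auto). lra.
Qed.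

Lemma gronwall (V V' : R -> R) K x0 : (forall x, is_derive V x (V' x)) -> (forall x, 0 <= V x) ->
  (forall x, Rabs (V' x) <= K * V x) -> V x0 = 0 -> forall x, V x = 0.
Proof.
  intros HD Hp HK H0 x.
  destruct (Rtotal_order x0 x) as [Hl|[->|Hl]]; auto.
  - set (W := fun y => V y * exp (- (K * y))).
    assert (HW : forall y, is_derive W y ((V' y - K * V y) * exp (- (K * y)))).
    { intros y. unfold W. eapply Deq. apply Dmult. apply HD.
      apply (Dcomp exp (fun y => - (K * y))). apply is_derive_Reals, derivable_pt_lim_exp.
      apply Dopp. apply Dscal. apply Did. simpl. ring. }
    destruct (MVTd W _ x0 x HW Hl) as [c [_ E]].
    assert (Hc : (V' c - K * V c) * exp (- (K * c)) <= 0).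
    { assert (V' c - K * V c <= 0). { specialize (HK c). apply abs_le in HK. lra. }
      assert (0 < exp (- (K * c))) by apply exp_pos. nra. }
    unfold W in E. rewrite H0 in E. assert (0 < exp (- (K * x))) by apply exp_pos.
    specialize (Hp x). assert (V x * exp (- (K * x)) <= 0) by nra. nra.
  - set (W := fun y => V y * exp (K * y)).
    assert (HW : forall y, is_derive W y ((V' y + K * V y) * exp (K * y))).
    { intros y. unfold W. eapply Deq. apply Dmult. apply HD.
      apply (Dcomp exp (fun y => K * y)). apply is_derive_Reals, derivable_pt_lim_exp.
      apply Dscal. apply Did. simpl. ring. }
    destruct (MVTd W _ x x0 HW Hl) as [c [_ E]].
    assert (Hc : 0 <= (V' c + K * V c) * exp (K * c)).
    { assert (0 <= V' c + K * V c). { specialize (HK c). apply abs_le in HK. lra. }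
      assert (0 < exp (K * c)) by apply exp_pos. nra. }
    unfold W in E. rewrite H0 in E. assert (0 < exp (K * x)) by apply exp_pos.
    specialize (Hp x). assert (V x * exp (K * x) <= 0) by nra. nra.
Qed.

Lemma div_lt a b c : 0 < b -> a / b < c -> a < c * b.
Proof. intros Hb H. replace a with (a / b * b) by (field; lra). apply Rmult_lt_compat_r; auto. Qed.
Lemma lt_div a b c : 0 < b -> a < c * b -> a / b < c.
Proof. intros Hb H. apply (Rmult_lt_reg_r b); auto. replace (a / b * b) with a by (field; lra). auto. Qed.
Lemma lt_div2 a b c : 0 < b -> a < c / b -> a * b < c.
Proof. intros Hb H. replace c with (c / b * b) by (field; lra). apply Rmult_lt_compat_r; auto. Qed.
Lemma sq0 x : x ^ 2 = 0 -> x = 0.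
Proof. intros H. simpl in H. rewrite Rmult_1_r in H. apply Rmult_integral in H. destruct H; auto. Qed.

Lemma LP_eps (f : R -> R) (L : R) : is_lim f p_infty L -> forall e, 0 < e -> exists M, forall x, M <= x -> Rabs (f x - L) < e.
Proof.
  intros H e He. apply is_lim_spec in H. destruct (H (mkposreal e He)) as [M HM].
  exists (M + 1). intros x Hx. apply (HM x). lra.
Qed.
Lemma LM_eps (f : R -> R) (L : R) : is_lim f m_infty L -> forall e, 0 < e -> exists M, forall x, x <= M -> Rabs (f x - L) < e.
Proof.
  intros H e He. apply is_lim_spec in H. destruct (H (mkposreal e He)) as [M HM].
  exists (M - 1). intros x Hx. apply (HM x). lra.
Qed.
Lemma eps_LP (f : R -> R) (L : R) : (forall e, 0 < e -> exists M, forall x, M <= x -> Rabs (f x - L) < e) -> is_lim f p_infty L.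
Proof.
  intros H. apply is_lim_spec. intros [e He]. destruct (H e He) as [M HM]. exists M. intros x Hx. apply HM. simpl. lra.
Qed.
Lemma eps_LM (f : R -> R) (L : R) : (forall e, 0 < e -> exists M, forall x, x <= M -> Rabs (f x - L) < e) -> is_lim f m_infty L.
Proof.
  intros H. apply is_lim_spec. intros [e He]. destruct (H e He) as [M HM]. exists M. intros x Hx. apply HM. simpl. lra.
Qed.

Lemma L_plus (f g : R -> R) x (a b : R) : is_lim f x a -> is_lim g x b -> is_lim (fun y => f y + g y) x (a + b).
Proof. intros; apply is_lim_plus'; auto. Qed.
Lemma L_minus (f g : R -> R) x (a b : R) : is_lim f x a -> is_lim g x b -> is_lim (fun y => f y - g y) x (a - b).
Proof. intros; apply is_lim_minus'; auto. Qed.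
Lemma L_mult (f g : R -> R) x (a b : R) : is_lim f x a -> is_lim g x b -> is_lim (fun y => f y * g y) x (a * b).
Proof. intros H1 H2. exact (is_lim_mult f g x a b H1 H2 I). Qed.
Lemma L_scal (f : R -> R) x (c a : R) : is_lim f x a -> is_lim (fun y => c * f y) x (c * a).
Proof. intros H. exact (is_lim_scal_l f c x a H). Qed.
Lemma L_const x (c : R) : is_lim (fun _ => c) x c.
Proof. apply is_lim_const. Qed.
Lemma L_ext (f g : R -> R) x (a : R) : (forall y, f y = g y) -> is_lim f x a -> is_lim g x a.
Proof. intros; eapply is_lim_ext; eauto. Qed.
Lemma L_eq (f : R -> R) x (a b : R) : is_lim f x a -> a = b -> is_lim f x b.
Proof. intros H ->; auto. Qed.

Lemma L_refl_MP (f : R -> R) (a : R) : is_lim f m_infty a -> is_lim (fun y => f (- y)) p_infty a.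
Proof.
  intros H. apply eps_LP. intros e He. destruct (LM_eps f a H e He) as [M HM].
  exists (- M). intros x Hx. apply HM. lra.
Qed.
Lemma L_refl_PM (f : R -> R) (a : R) : is_lim f p_infty a -> is_lim (fun y => f (- y)) m_infty a.
Proof.
  intros H. apply eps_LM. intros e He. destruct (LP_eps f a H e He) as [M HM].
  exists (- M). intros x Hx. apply HM. lra.
Qed.

Lemma DLP (f f' : R -> R) (L c X : R) : (forall x, is_derive f x (f' x)) -> is_lim f p_infty L -> 0 < c ->
  (forall x, X <= x -> c <= Rabs (f' x)) -> False.
Proof.
  intros HD HL Hc HX. destruct (LP_eps f L HL (c/2)) as [M HM]. lra.
  set (x1 := Rmax X M). assert (X <= x1) by apply Rmax_l. assert (M <= x1) by apply Rmax_r.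
  destruct (MVTd f f' x1 (x1 + 1) HD) as [k [Hk E]]. lra.
  replace (x1 + 1 - x1) with 1 in E by ring.
  assert (H1 := HM x1 H0). assert (H2 := HM (x1 + 1) ltac:(lra)). assert (H3 := HX k ltac:(lra)).
  apply abs_lt in H1. apply abs_lt in H2. unfold Rabs in H3. destruct (Rcase_abs (f' k)); lra.
Qed.
Lemma DLM (f f' : R -> R) (L c X : R) : (forall x, is_derive f x (f' x)) -> is_lim f m_infty L -> 0 < c ->
  (forall x, x <= X -> c <= Rabs (f' x)) -> False.
Proof.
  intros HD HL Hc HX. destruct (LM_eps f L HL (c/2)) as [M HM]. lra.
  set (x1 := Rmin X M). assert (x1 <= X) by apply Rmin_l. assert (x1 <= M) by apply Rmin_r.
  destruct (MVTd f f' (x1 - 1) x1 HD) as [k [Hk E]]. lra.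
  replace (x1 - (x1 - 1)) with 1 in E by ring.
  assert (H1 := HM x1 H0). assert (H2 := HM (x1 - 1) ltac:(lra)). assert (H3 := HX k ltac:(lra)).
  apply abs_lt in H1. apply abs_lt in H2. unfold Rabs in H3. destruct (Rcase_abs (f' k)); lra.
Qed.

Lemma derlimP (f f' : R -> R) (L l : R) : (forall x, is_derive f x (f' x)) -> is_lim f p_infty L -> is_lim f' p_infty l -> l = 0.
Proof.
  intros HD HL Hl. destruct (Req_dec l 0) as [|Hn]; auto. exfalso.
  assert (Ha : 0 < Rabs l) by (apply Rabs_pos_lt; auto).
  destruct (LP_eps f' l Hl (Rabs l / 2)) as [M HM]. lra.
  apply (DLP f f' L (Rabs l / 2) M HD HL). lra.
  intros x Hx. specialize (HM x Hx). unfold Rabs in *. destruct (Rcase_abs (f' x - l)), (Rcase_abs l), (Rcase_abs (f' x)); lra.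
Qed.
Lemma derlimM (f f' : R -> R) (L l : R) : (forall x, is_derive f x (f' x)) -> is_lim f m_infty L -> is_lim f' m_infty l -> l = 0.
Proof.
  intros HD HL Hl. destruct (Req_dec l 0) as [|Hn]; auto. exfalso.
  assert (Ha : 0 < Rabs l) by (apply Rabs_pos_lt; auto).
  destruct (LM_eps f' l Hl (Rabs l / 2)) as [M HM]. lra.
  apply (DLM f f' L (Rabs l / 2) M HD HL). lra.
  intros x Hx. specialize (HM x Hx). unfold Rabs in *. destruct (Rcase_abs (f' x - l)), (Rcase_abs l), (Rcase_abs (f' x)); lra.
Qed.

Lemma bounded_fun (f : R -> R) (L1 L2 : R) : (forall x, continuity_pt f x) -> is_lim f p_infty L1 -> is_lim f m_infty L2 ->
  exists D, 0 <= D /\ forall x, Rabs (f x) <= D.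
Proof.
  intros Hc H1 H2. destruct (LP_eps f L1 H1 1 Rlt_0_1) as [M1 HM1]. destruct (LM_eps f L2 H2 1 Rlt_0_1) as [M2 HM2].
  set (a := Rmin M1 M2). set (b := Rmax M1 M2).
  assert (Hab : a <= b) by (unfold a, b; apply Rle_trans with M1; [apply Rmin_l|apply Rmax_l]).
  destruct (continuity_ab_maj f a b Hab (fun c _ => Hc c)) as [xM [HxM _]].
  destruct (continuity_ab_min f a b Hab (fun c _ => Hc c)) as [xm [Hxm _]].
  exists (Rabs L1 + Rabs L2 + 1 + Rabs (f xM) + Rabs (f xm)). split.
  { assert (0 <= Rabs L1) by apply Rabs_pos. assert (0 <= Rabs L2) by apply Rabs_pos.
    assert (0 <= Rabs (f xM)) by apply Rabs_pos. assert (0 <= Rabs (f xm)) by apply Rabs_pos. lra. }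
  intros x.
  assert (0 <= Rabs L1) by apply Rabs_pos. assert (0 <= Rabs L2) by apply Rabs_pos.
  assert (0 <= Rabs (f xM)) by apply Rabs_pos. assert (0 <= Rabs (f xm)) by apply Rabs_pos.
  destruct (Rle_lt_dec M1 x) as [h1|h1].
  - specialize (HM1 x h1). assert (Rabs (f x) <= Rabs (f x - L1) + Rabs L1).
    { replace (f x) with ((f x - L1) + L1) at 1 by ring. apply Rabs_triang. } lra.
  - destruct (Rle_lt_dec x M2) as [h2|h2].
    + specialize (HM2 x h2). assert (Rabs (f x) <= Rabs (f x - L2) + Rabs L2).
      { replace (f x) with ((f x - L2) + L2) at 1 by ring. apply Rabs_triang. } lra.
    + assert (a <= x <= b). { unfold a, b. split. apply Rle_trans with M2. apply Rmin_r. lra. apply Rle_trans with M1. lra. apply Rmax_l. }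
      specialize (HxM x H5). specialize (Hxm x H5).
      apply le_abs. split.
      * assert (- Rabs (f xm) <= f xm) by (unfold Rabs; destruct (Rcase_abs (f xm)); lra). lra.
      * assert (f xM <= Rabs (f xM)) by apply Rle_abs. lra.
Qed.

Lemma nondecr_limM (f : R -> R) (L : R) : (forall x y, x <= y -> f x <= f y) -> is_lim f m_infty L -> forall x, L <= f x.
Proof.
  intros Hm HL x. destruct (Rle_lt_dec L (f x)) as [ok|Hlt]; auto. exfalso.
  destruct (LM_eps f L HL (L - f x)) as [M HM]. lra.
  set (y := Rmin x M). assert (y <= x) by apply Rmin_l. assert (y <= M) by apply Rmin_r.
  specialize (HM y H0). specialize (Hm y x H). apply abs_lt in HM. lra.
Qed.
Lemma nondecr_limP (f : R -> R) (L : R) : (forall x y, x <= y -> f x <= f y) -> is_lim f p_infty L -> forall x, f x <= L.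
Proof.
  intros Hm HL x. destruct (Rle_lt_dec (f x) L) as [ok|Hlt]; auto. exfalso.
  destruct (LP_eps f L HL (f x - L)) as [M HM]. lra.
  set (y := Rmax x M). assert (x <= y) by apply Rmax_l. assert (M <= y) by apply Rmax_r.
  specialize (HM y H0). specialize (Hm x y H). apply abs_lt in HM. lra.
Qed.

Lemma loc_of (x d : R) (P : R -> Prop) : 0 < d -> (forall y, Rabs (y - x) < d -> P y) -> locally x P.
Proof.
  intros Hd H. exists (mkposreal d Hd). intros y Hy. apply H.
  unfold ball in Hy; simpl in Hy; unfold AbsRing_ball in Hy. unfold abs, minus, plus, opp in Hy; simpl in Hy. exact Hy.
Qed.

Lemma dzp (z : R -> R) x l : is_derive z x l ->
  is_derive (fun y => ((z y + Rabs (z y)) / 2) ^ 2) x (2 * ((z x + Rabs (z x)) / 2) * l).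
Proof.
  intros H. assert (Hc := deriv_cont _ _ _ H).
  destruct (Rtotal_order (z x) 0) as [Hn|[H0|Hp]].
  - destruct (cont_eps _ _ Hc (- z x)) as [d [Hd Hy]]. lra.
    eapply is_derive_ext_loc. apply (loc_of x d). exact Hd.
    intros y Hyx. specialize (Hy y Hyx). apply abs_lt in Hy. instantiate (1 := fun _ => 0).
    simpl. rewrite Rabs_left by lra. field.
    rewrite Rabs_left by lra. eapply Deq. apply Dconst. field.
  - rewrite is_derive_Reals in *. rewrite H0, Rabs_R0.
    replace (2 * ((0 + 0) / 2) * l) with 0 by field.
    intros e He.
    destruct (H 1 Rlt_0_1) as [d1 Hd1].
    set (K := (Rabs l + 1)). assert (HK : 0 < K) by (unfold K; assert (0 <= Rabs l) by apply Rabs_pos; lra).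
    assert (Hd : 0 < Rmin d1 (e / (K * K))). { apply Rmin_glb_lt. apply cond_pos. apply Rdiv_lt_0_compat; nra. }
    exists (mkposreal _ Hd). intros h Hh Hhd. simpl in Hhd.
    assert (Hh1 : Rabs h < d1) by (apply Rlt_le_trans with (1 := Hhd); apply Rmin_l).
    assert (Hh2 : Rabs h < e / (K * K)) by (apply Rlt_le_trans with (1 := Hhd); apply Rmin_r).
    specialize (Hd1 h Hh Hh1). rewrite H0 in Hd1.
    rewrite Rminus_0_r in Hd1.
    assert (Hz : Rabs (z (x + h)) <= K * Rabs h).
    { assert (Rabs (z (x + h) / h) < Rabs l + 1).
      { replace (z (x + h) / h) with ((z (x + h) / h - l) + l) by ring.
        eapply Rle_lt_trans. apply Rabs_triang. lra. }
      rewrite Rabs_div in H1 by auto. assert (0 < Rabs h) by (apply Rabs_pos_lt; auto).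
      unfold K. apply div_lt in H1; auto; lra. }
    rewrite H0, Rabs_R0. replace ((0 + 0) / 2) with 0 by field.
    set (w := z (x + h)).
    assert (Hw : ((w + Rabs w) / 2) ^ 2 <= w * w).
    { unfold Rabs. destruct (Rcase_abs w); nra. }
    assert (Hw0 : 0 <= ((w + Rabs w) / 2) ^ 2) by (apply pow2_ge_0).
    assert (0 < Rabs h) by (apply Rabs_pos_lt; auto).
    replace ((((w + Rabs w) / 2) ^ 2 - 0 ^ 2) / h - 0) with (((w + Rabs w) / 2) ^ 2 / h) by (field; auto).
    rewrite Rabs_div by auto. rewrite (Rabs_right (((w + Rabs w) / 2) ^ 2)) by lra.
    apply lt_div; auto.
    assert (w * w = Rabs w * Rabs w) by (unfold Rabs; destruct (Rcase_abs w); nra).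
    assert (0 <= Rabs w) by apply Rabs_pos.
    assert (Rabs w * Rabs w <= (K * Rabs h) * (K * Rabs h)) by (apply Rmult_le_compat; auto).
    assert (K * K * Rabs h < e).
    { apply lt_div2 in Hh2; [|nra]. nra. }
    nra.
  - destruct (cont_eps _ _ Hc (z x)) as [d [Hd Hy]]. lra.
    eapply is_derive_ext_loc. apply (loc_of x d). exact Hd.
    intros y Hyx. specialize (Hy y Hyx). apply abs_lt in Hy. instantiate (1 := fun y => z y ^ 2).
    simpl. rewrite Rabs_right by lra. field.
    rewrite Rabs_right by lra. eapply Deq. apply Dsq. exact H. field.
Qed.

Lemma Rmin_lt_or x y a : Rmin x y < a -> x < a \/ y < a.
Proof. unfold Rmin; destruct (Rle_dec x y); auto. Qed.

Lemma const_lim (f : R -> R) (c L : R) : (forall y, f y = c) -> is_lim f m_infty L -> c = L.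
Proof.
  intros Hc HL. destruct (Req_dec c L) as [|Hn]; auto. exfalso.
  assert (0 < Rabs (c - L)) by (apply Rabs_pos_lt; lra).
  destruct (LM_eps f L HL (Rabs (c - L))) as [M HM]; auto.
  specialize (HM M (Rle_refl _)). rewrite Hc in HM. lra.
Qed.

Lemma lowP (f f' : R -> R) : (forall x, is_derive f x (f' x)) ->
  forall t a, f t < a -> exists d, 0 < d /\ forall s, Rabs (s - t) < d -> f s < a.
Proof.
  intros H t a Ht. destruct (cont_eps _ _ (deriv_cont _ _ _ (H t)) (a - f t)) as [d [Hd Hs]]. lra.
  exists d; split; auto. intros s Hst. specialize (Hs s Hst). apply abs_lt in Hs. lra.
Qed.

Lemma Dsqh (f : R -> R) x a : is_derive f x a -> is_derive (fun y => f y ^ 2 / 2) x (f x * a).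
Proof.
  intros H. eapply Dext. 2: eapply Deq. 2: apply (Dscal (/2) _ _ _ (Dsq _ _ _ H)). intros; simpl; field. field.
Qed.

Lemma bndU (m D a w e : R): 0 < m -> 0 <= D -> -D <= e <= D ->
  Rabs (2*a*((m-e)*a + e*(w + w)) + 2*w*(m*w + e/2*(w - (a - 2*w)))) <= (4*m + 8*D)*(a^2 + w^2).
Proof.
  intros Hm HD He. apply le_abs.
  assert (0 <= (D - e) * (a*a)) by (apply Rmult_le_pos; [lra|apply Rle_0_sqr]).
  assert (0 <= (D + e) * (a*a)) by (apply Rmult_le_pos; [lra|apply Rle_0_sqr]).
  assert (0 <= (D - e) * (w*w)) by (apply Rmult_le_pos; [lra|apply Rle_0_sqr]).
  assert (0 <= (D + e) * (w*w)) by (apply Rmult_le_pos; [lra|apply Rle_0_sqr]).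
  assert (0 <= (D - e) * ((a+w)*(a+w))) by (apply Rmult_le_pos; [lra|apply Rle_0_sqr]).
  assert (0 <= (D + e) * ((a+w)*(a+w))) by (apply Rmult_le_pos; [lra|apply Rle_0_sqr]).
  assert (0 <= (D - e) * ((a-w)*(a-w))) by (apply Rmult_le_pos; [lra|apply Rle_0_sqr]).
  assert (0 <= (D + e) * ((a-w)*(a-w))) by (apply Rmult_le_pos; [lra|apply Rle_0_sqr]).
  assert (0 <= m * (a*a)) by (apply Rmult_le_pos; [lra|apply Rle_0_sqr]).
  assert (0 <= m * (w*w)) by (apply Rmult_le_pos; [lra|apply Rle_0_sqr]).
  split; nra.
Qed.
Lemma bndU2 (m D q w e : R): 0 < m -> 0 <= D -> -D <= e <= D ->
  Rabs (2*q*((m-e/2)*q - 2*e*(w + w)) + 2*w*(m*w + e/2*(-w - (q/4 - w)))) <= (4*m + 8*D)*(q^2 + w^2).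
Proof.
  intros Hm HD He. apply le_abs.
  assert (0 <= (D - e) * (q*q)) by (apply Rmult_le_pos; [lra|apply Rle_0_sqr]).
  assert (0 <= (D + e) * (q*q)) by (apply Rmult_le_pos; [lra|apply Rle_0_sqr]).
  assert (0 <= (D - e) * (w*w)) by (apply Rmult_le_pos; [lra|apply Rle_0_sqr]).
  assert (0 <= (D + e) * (w*w)) by (apply Rmult_le_pos; [lra|apply Rle_0_sqr]).
  assert (0 <= (D - e) * ((q+w)*(q+w))) by (apply Rmult_le_pos; [lra|apply Rle_0_sqr]).
  assert (0 <= (D + e) * ((q+w)*(q+w))) by (apply Rmult_le_pos; [lra|apply Rle_0_sqr]).
  assert (0 <= (D - e) * ((q-w)*(q-w))) by (apply Rmult_le_pos; [lra|apply Rle_0_sqr]).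
  assert (0 <= (D + e) * ((q-w)*(q-w))) by (apply Rmult_le_pos; [lra|apply Rle_0_sqr]).
  assert (0 <= m * (q*q)) by (apply Rmult_le_pos; [lra|apply Rle_0_sqr]).
  assert (0 <= m * (w*w)) by (apply Rmult_le_pos; [lra|apply Rle_0_sqr]).
  split; nra.
Qed.

Section Core.
Variables (m dl sp : R) (sg d z : R -> R).
Hypotheses (Hm : 0 < m) (Hdl : dl < 0)
  (Hsg : forall x : R, is_derive sg x (m * sg x - d x ^ 2 / 2))
  (Hd : forall x : R, is_derive d x (z x))
  (Hz : forall x : R, is_derive z x (m * z x + d x / 2 * (Rabs (z x) - (m * sg x - d x ^ 2 / 2))))
  (Lsg0 : is_lim sg m_infty 0) (Ld0 : is_lim d m_infty 0)
  (Lsg1 : is_lim sg p_infty sp) (Ld1 : is_lim d p_infty dl).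

Let S1 x := m * sg x - d x ^ 2 / 2.
Let A x := S1 x + 2 * z x.
Let Q x := 4 * (S1 x + z x).
Let Ad x := (m - d x) * A x + d x * (z x + Rabs (z x)).
Let Qd x := (m - d x / 2) * Q x - 2 * d x * (z x - Rabs (z x)).

Lemma HS1 (x : R) : is_derive S1 x (m * S1 x - d x * z x).
Proof.
  unfold S1. eapply Deq. apply (Dminus (fun y => m * sg y) (fun y => d y ^ 2 / 2)).
  apply Dscal, Hsg. apply Dsqh, Hd. simpl. field.
Qed.

Lemma HA (x : R) : is_derive A x (Ad x).
Proof.
  eapply Deq. apply (Dplus S1 (fun y => 2 * z y)). apply HS1. apply Dscal, Hz.
  unfold Ad, A, S1. simpl. field.
Qed.

Lemma HQ (x : R) : is_derive Q x (Qd x).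
Proof.
  eapply Deq. apply (Dscal 4 (fun y => S1 y + z y)). apply Dplus. apply HS1. apply Hz.
  unfold Qd, Q, S1. simpl. field.
Qed.

Lemma zAQ x : z x = A x - Q x / 4.
Proof. unfold A, Q. field. Qed.

Lemma LS1P : is_lim S1 p_infty 0.
Proof.
  assert (H : is_lim S1 p_infty (m * sp - /2 * (dl * dl))).
  { unfold S1. apply (L_minus (fun y => m * sg y) (fun y => d y ^ 2 / 2)). apply L_scal; auto.
    apply (L_ext (fun y => /2 * (d y * d y))). intros y; simpl; field.
    apply L_scal. apply L_mult; [exact Ld1|exact Ld1]. }
  assert (E := derlimP sg S1 sp _ Hsg Lsg1 H). rewrite E in H. exact H.
Qed.

Lemma d_bounded : exists D, 0 <= D /\ forall x, Rabs (d x) <= D.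
Proof. apply (bounded_fun d dl 0); auto. intros x; eapply deriv_cont; apply Hd. Qed.

Lemma X1_ex : exists X1, forall x, X1 <= x -> d x < dl / 2.
Proof.
  destruct (LP_eps d dl Ld1 (- dl / 2)) as [M HM]. lra.
  exists M. intros x Hx. specialize (HM x Hx). apply abs_lt in HM. lra.
Qed.

Lemma S1_small e : 0 < e -> exists M, forall x, M <= x -> Rabs (S1 x) < e.
Proof.
  intros He. destruct (LP_eps S1 0 LS1P e He) as [M HM]. exists M. intros x Hx. specialize (HM x Hx).
  rewrite Rminus_0_r in HM. auto.
Qed.

Lemma diverge_pos c X : 0 < c -> (forall x, X <= x -> c <= Rabs (z x)) -> False.
Proof. intros Hc H. exact (DLP d z dl c X Hd Ld1 Hc H). Qed.

Lemma A_nonneg X1 : (forall x, X1 <= x -> d x < dl / 2) -> forall x0, X1 <= x0 -> 0 <= A x0.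
Proof.
  intros HX x0 Hx0. destruct (Rle_lt_dec 0 (A x0)) as [ok|Hneg]; auto. exfalso.
  assert (Hb : forall y, x0 <= y -> - A x0 <= - A y).
  { apply (barrier (fun y => - A y) x0 (- A x0)). lra.
    - intros t _ Ht. apply (lowP (fun y => - A y) (fun y => - Ad y)); auto. intros; apply Dopp, HA.
    - intros t Ht Hge. destruct (right_gt (fun y => - A y) t (- Ad t) (- A x0)) as [e [He Hs]].
      apply Dopp, HA. auto.
      intros Eq. assert (A t = A x0) by lra. unfold Ad. specialize (HX t ltac:(lra)).
      assert (0 <= z t + Rabs (z t)) by (unfold Rabs; destruct (Rcase_abs (z t)); lra).
      assert ((m - d t) * A t < 0). { assert (0 < m - d t) by lra. nra. } nra.
      exists e. split; auto. intros s Hs'. specialize (Hs s Hs'). lra. }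
  destruct (S1_small (- A x0 / 2)) as [M HM]. lra.
  apply (diverge_pos (- A x0 / 4) (Rmax x0 M)). lra.
  intros x Hx. assert (x0 <= x) by (eapply Rle_trans; [apply Rmax_l|exact Hx]).
  assert (M <= x) by (eapply Rle_trans; [apply Rmax_r|exact Hx]).
  specialize (Hb x H). specialize (HM x H0). apply abs_lt in HM.
  assert (z x = (A x - S1 x) / 2) by (unfold A; field).
  assert (z x <= A x0 / 4) by lra.
  unfold Rabs; destruct (Rcase_abs (z x)); lra.
Qed.

Lemma Q_nonneg X1 : (forall x, X1 <= x -> d x < dl / 2) -> forall x0, X1 <= x0 -> 0 <= Q x0.
Proof.
  intros HX x0 Hx0. destruct (Rle_lt_dec 0 (Q x0)) as [ok|Hneg]; auto. exfalso.
  assert (Hb : forall y, x0 <= y -> - Q x0 <= - Q y).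
  { apply (barrier (fun y => - Q y) x0 (- Q x0)). lra.
    - intros t _ Ht. apply (lowP (fun y => - Q y) (fun y => - Qd y)); auto. intros; apply Dopp, HQ.
    - intros t Ht Hge. destruct (right_gt (fun y => - Q y) t (- Qd t) (- Q x0)) as [e [He Hs]].
      apply Dopp, HQ. auto.
      intros Eq. assert (Q t = Q x0) by lra. unfold Qd. specialize (HX t ltac:(lra)).
      assert (z t - Rabs (z t) <= 0) by (unfold Rabs; destruct (Rcase_abs (z t)); lra).
      assert ((m - d t / 2) * Q t < 0). { assert (0 < m - d t / 2) by lra. nra. } nra.
      exists e. split; auto. intros s Hs'. specialize (Hs s Hs'). lra. }
  destruct (S1_small (- Q x0 / 8)) as [M HM]. lra.
  apply (diverge_pos (- Q x0 / 8) (Rmax x0 M)). lra.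
  intros x Hx. assert (x0 <= x) by (eapply Rle_trans; [apply Rmax_l|exact Hx]).
  assert (M <= x) by (eapply Rle_trans; [apply Rmax_r|exact Hx]).
  specialize (Hb x H). specialize (HM x H0). apply abs_lt in HM.
  assert (z x = Q x / 4 - S1 x) by (unfold Q; field).
  assert (z x <= Q x0 / 8) by lra.
  unfold Rabs; destruct (Rcase_abs (z x)); lra.
Qed.

Lemma min_zero X1 : (forall x, X1 <= x -> d x < dl / 2) -> Rmin (A X1) (Q X1 / 4) <= 0.
Proof.
  intros HX. assert (HQ4 : forall y : R, is_derive (fun y => Q y / 4) y (Qd y / 4)).
  { intros y. eapply Dext. 2: eapply Deq. 2: apply (Dscal (/4) Q y _ (HQ y)). intros; simpl; field. field. }
  set (mu := Rmin (A X1) (Q X1 / 4)). destruct (Rle_lt_dec mu 0) as [ok|Hpos]; auto. exfalso.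
  assert (Hb : forall y, X1 <= y -> mu <= Rmin (A y) (Q y / 4)).
  { apply (barrier (fun y => Rmin (A y) (Q y / 4)) X1 mu). unfold mu; lra.
    - intros t _ Ht. destruct (Rmin_lt_or _ _ _ Ht) as [H1|H1].
      + destruct (lowP A Ad HA t mu H1) as [dd [Hdd Hs]]. exists dd; split; auto.
        intros s Hst. specialize (Hs s Hst). eapply Rle_lt_trans. apply Rmin_l. auto.
      + destruct (lowP (fun y => Q y / 4) (fun y => Qd y / 4) HQ4 t mu H1) as [dd [Hdd Hs]].
        exists dd; split; auto.
        intros s Hst. specialize (Hs s Hst). eapply Rle_lt_trans. apply Rmin_r. auto.
    - intros t Ht Hge. assert (Ha : mu <= A t) by (eapply Rle_trans; [exact Hge|apply Rmin_l]).
      assert (Hq : mu <= Q t / 4) by (eapply Rle_trans; [exact Hge|apply Rmin_r]).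
      specialize (HX t Ht).
      destruct (right_gt A t (Ad t) mu (HA t) Ha) as [e1 [He1 Hs1]].
      { intros Eq. unfold Ad. assert (z t <= 0) by (rewrite zAQ; lra).
        assert (z t + Rabs (z t) = 0) by (unfold Rabs; destruct (Rcase_abs (z t)); lra).
        rewrite H0. assert (0 < m - d t) by lra. nra. }
      destruct (right_gt (fun y => Q y / 4) t (Qd t / 4) mu (HQ4 t) Hq) as [e2 [He2 Hs2]].
      { intros Eq. unfold Qd. assert (0 <= z t) by (rewrite zAQ; lra).
        assert (z t - Rabs (z t) = 0) by (unfold Rabs; destruct (Rcase_abs (z t)); lra).
        rewrite H0. assert (0 < m - d t / 2) by lra. nra. }
      exists (Rmin e1 e2). split. apply Rmin_glb_lt; auto.
      intros s Hs. assert (s < t + e1) by (assert (Rmin e1 e2 <= e1) by apply Rmin_l; lra).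
      assert (s < t + e2) by (assert (Rmin e1 e2 <= e2) by apply Rmin_r; lra).
      specialize (Hs1 s ltac:(lra)). specialize (Hs2 s ltac:(lra)).
      apply Rmin_glb; lra. }
  destruct (S1_small (mu / 2)) as [M HM]. lra.
  apply (diverge_pos (mu / 4) (Rmax X1 M)). lra.
  intros x Hx. assert (X1 <= x) by (eapply Rle_trans; [apply Rmax_l|exact Hx]).
  assert (M <= x) by (eapply Rle_trans; [apply Rmax_r|exact Hx]).
  specialize (Hb x H). specialize (HM x H0). apply abs_lt in HM.
  assert (mu <= A x) by (eapply Rle_trans; [exact Hb|apply Rmin_l]).
  assert (z x = (A x - S1 x) / 2) by (unfold A; field).
  assert (mu / 4 <= z x) by lra.
  unfold Rabs; destruct (Rcase_abs (z x)); lra.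
Qed.

Lemma U_zero x0 : A x0 = 0 -> z x0 <= 0 -> forall x, A x = 0.
Proof.
  intros HA0 Hz0. destruct d_bounded as [D [HD0 HD]].
  set (zd := fun y => m * z y + d y / 2 * (Rabs (z y) - S1 y)).
  set (U := fun y => A y ^ 2 + ((z y + Rabs (z y)) / 2) ^ 2).
  set (U' := fun y => 2 * A y * Ad y + 2 * ((z y + Rabs (z y)) / 2) * zd y).
  assert (HU : forall y : R, is_derive U y (U' y)).
  { intros y. unfold U, U'. apply (Dplus (fun y => A y ^ 2) (fun y => ((z y + Rabs (z y)) / 2) ^ 2)).
    apply Dsq, HA. apply dzp. apply Hz. }
  assert (HUp : forall y, 0 <= U y).
  { intros y; unfold U. assert (0 <= A y ^ 2) by apply pow2_ge_0. assert (0 <= ((z y + Rabs (z y)) / 2) ^ 2) by apply pow2_ge_0. lra. }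
  assert (HK : forall y, Rabs (U' y) <= (4 * m + 8 * D) * U y).
  { intros y. specialize (HD y). apply abs_le in HD. unfold U', U, zd, Ad.
    assert (EA : S1 y = A y - 2 * z y) by (unfold A; ring).
    rewrite EA. destruct (Rle_lt_dec (z y) 0) as [Hn|Hp].
    - rewrite (Rabs_left1 _ Hn). replace ((z y + - z y) / 2) with 0 by field.
      replace (z y + - z y) with 0 by ring.
      pose proof (bndU m D (A y) 0 (d y) Hm HD0 HD) as B.
      replace (2 * A y * ((m - d y) * A y + d y * 0) + 2 * 0 * (m * z y + d y / 2 * (- z y - (A y - 2 * z y))))
        with (2 * A y * ((m - d y) * A y + d y * (0 + 0)) + 2 * 0 * (m * 0 + d y / 2 * (0 - (A y - 2 * 0)))) by ring.
      exact B.
    - rewrite (Rabs_right _ (Rle_ge _ _ (Rlt_le _ _ Hp))). replace ((z y + z y) / 2) with (z y) by field.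
      exact (bndU m D (A y) (z y) (d y) Hm HD0 HD). }
  assert (HU0 : U x0 = 0).
  { unfold U. rewrite HA0. rewrite (Rabs_left1 _ Hz0). replace ((z x0 + - z x0) / 2) with 0 by field. ring. }
  intros x. assert (E := gronwall U U' _ x0 HU HUp HK HU0 x). unfold U in E.
  assert (0 <= A x ^ 2) by apply pow2_ge_0. assert (0 <= ((z x + Rabs (z x)) / 2) ^ 2) by apply pow2_ge_0.
  assert (A x ^ 2 = 0) by lra. apply sq0; auto.
Qed.

Lemma U2_zero x0 : Q x0 = 0 -> 0 <= z x0 -> forall x, 0 <= z x.
Proof.
  intros HQ0 Hz0. destruct d_bounded as [D [HD0 HD]].
  set (zd := fun y => - (m * z y + d y / 2 * (Rabs (z y) - S1 y))).
  set (U := fun y => Q y ^ 2 + ((- z y + Rabs (- z y)) / 2) ^ 2).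
  set (U' := fun y => 2 * Q y * Qd y + 2 * ((- z y + Rabs (- z y)) / 2) * zd y).
  assert (HU : forall y : R, is_derive U y (U' y)).
  { intros y. unfold U, U'. apply (Dplus (fun y => Q y ^ 2) (fun y => ((- z y + Rabs (- z y)) / 2) ^ 2)).
    apply Dsq, HQ. apply (dzp (fun y => - z y)). apply Dopp, Hz. }
  assert (HUp : forall y, 0 <= U y).
  { intros y; unfold U. assert (0 <= Q y ^ 2) by apply pow2_ge_0. assert (0 <= ((- z y + Rabs (- z y)) / 2) ^ 2) by apply pow2_ge_0. lra. }
  assert (HK : forall y, Rabs (U' y) <= (4 * m + 8 * D) * U y).
  { intros y. specialize (HD y). apply abs_le in HD. unfold U', U, zd, Qd.
    assert (EA : S1 y = Q y / 4 - z y) by (unfold Q; field).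
    rewrite EA. rewrite Rabs_Ropp. destruct (Rle_lt_dec 0 (z y)) as [Hn|Hp].
    - rewrite (Rabs_right _ (Rle_ge _ _ Hn)). replace ((- z y + z y) / 2) with 0 by field.
      pose proof (bndU2 m D (Q y) 0 (d y) Hm HD0 HD) as B.
      replace (2 * Q y * ((m - d y / 2) * Q y - 2 * d y * (z y - z y)) + 2 * 0 * - (m * z y + d y / 2 * (z y - (Q y / 4 - z y))))
        with (2 * Q y * ((m - d y / 2) * Q y - 2 * d y * (0 + 0)) + 2 * 0 * (m * 0 + d y / 2 * (- 0 - (Q y / 4 - 0)))) by ring.
      replace ((4 * m + 8 * D) * (Q y ^ 2 + 0 ^ 2)) with ((4 * m + 8 * D) * (Q y ^ 2 + 0 ^ 2)) by ring.
      exact B.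
    - rewrite (Rabs_left _ Hp). replace ((- z y + - z y) / 2) with (- z y) by field.
      pose proof (bndU2 m D (Q y) (z y) (d y) Hm HD0 HD) as B.
      replace (2 * Q y * ((m - d y / 2) * Q y - 2 * d y * (z y - - z y)) + 2 * - z y * - (m * z y + d y / 2 * (- z y - (Q y / 4 - z y))))
        with (2 * Q y * ((m - d y / 2) * Q y - 2 * d y * (z y + z y)) + 2 * z y * (m * z y + d y / 2 * (- z y - (Q y / 4 - z y)))) by ring.
      replace ((- z y) ^ 2) with (z y ^ 2) by ring. exact B. }
  assert (HU0 : U x0 = 0).
  { unfold U. rewrite HQ0. rewrite Rabs_Ropp, (Rabs_right _ (Rle_ge _ _ Hz0)). replace ((- z x0 + z x0) / 2) with 0 by field. ring. }
  intros x. assert (E := gronwall U U' _ x0 HU HUp HK HU0 x). unfold U in E.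
  assert (0 <= Q x ^ 2) by apply pow2_ge_0. assert (0 <= ((- z x + Rabs (- z x)) / 2) ^ 2) by apply pow2_ge_0.
  assert (E2 : ((- z x + Rabs (- z x)) / 2) ^ 2 = 0) by lra. apply sq0 in E2.
  rewrite Rabs_Ropp in E2. unfold Rabs in E2. destruct (Rcase_abs (z x)); lra.
Qed.

Theorem core : dl = -4 * m /\ (forall x, sg x = -2 * d x) /\ (forall x, z x = d x * (m + d x / 4)).
Proof.
  destruct X1_ex as [X1 HX].
  assert (HA0 := A_nonneg X1 HX X1 (Rle_refl _)).
  assert (HQ0 := Q_nonneg X1 HX X1 (Rle_refl _)).
  assert (Hmin := min_zero X1 HX).
  assert (HAall : forall x, A x = 0).
  { destruct (Rle_lt_dec (z X1) 0) as [Hn|Hp].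
    - apply (U_zero X1); auto. assert (A X1 <= Q X1 / 4) by (rewrite zAQ in Hn; lra).
      rewrite Rmin_left in Hmin by auto. lra.
    - exfalso. assert (Q X1 / 4 <= A X1) by (rewrite zAQ in Hp; lra).
      rewrite Rmin_right in Hmin by auto. assert (Q X1 = 0) by lra.
      assert (Hzp := U2_zero X1 H0 (Rlt_le _ _ Hp)).
      assert (Hmono : forall x y, x <= y -> d x <= d y) by (apply (mono d z Hd Hzp)).
      assert (0 <= d X1) by (apply (nondecr_limM d 0 Hmono Ld0)).
      assert (d X1 <= dl) by (apply (nondecr_limP d dl Hmono Ld1)). lra. }
  assert (Hc : forall x, sg x + 2 * d x = 0).
  { intros x. assert (HD : forall y : R, is_derive (fun y => sg y + 2 * d y) y 0).
    { intros y. eapply Deq. apply (Dplus sg (fun y => 2 * d y)). apply Hsg. apply Dscal, Hd.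
      specialize (HAall y). unfold A, S1 in HAall. simpl. lra. }
    apply (const_lim (fun y => sg y + 2 * d y) _ 0 (fun y => const_zero _ HD y x)).
    eapply L_eq. apply (L_plus sg (fun y => 2 * d y)). exact Lsg0. apply L_scal. exact Ld0. ring. }
  assert (Hz' : forall x, z x = d x * (m + d x / 4)).
  { intros x. specialize (HAall x). specialize (Hc x). unfold A, S1 in HAall.
    assert (sg x = -2 * d x) by lra. rewrite H in HAall. lra. }
  split; [|split; [intros x; specialize (Hc x); lra|exact Hz']].
  assert (Lz : is_lim z p_infty (dl * (m + dl / 4))).
  { apply (L_ext (fun x => d x * (m + d x / 4))). intros; symmetry; apply Hz'.
    apply L_mult. exact Ld1. apply (L_ext (fun x => m + /4 * d x)). intros; simpl; field.
    eapply L_eq. apply L_plus. apply L_const. apply L_scal. exact Ld1. field. }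
  assert (E := derlimP d z dl _ Hd Ld1 Lz).
  assert (dl <> 0) by lra. assert (m + dl / 4 = 0). { apply Rmult_integral in E. destruct E; [lra|auto]. } lra.
Qed.

End Core.

Lemma Dshift (g G : R -> R) c (y : R) : (forall x : R, is_derive g x (G x)) -> is_derive (fun z => g (z - c)) y (G (y - c)).
Proof.
  intros H. eapply Deq. apply (Dcomp g (fun z => z - c) y (G (y - c)) 1). apply H.
  eapply Deq. apply (Dminus (fun z => z) (fun _ => c)). apply Did. apply Dconst. ring. ring.
Qed.

Definition Fr (g1 g2 G1 G2 : R -> R) (x : R) : R :=
  if Rle_dec ((G2 x - G1 x) / 2) 0 then - ((G2 x - G1 x) / 2) * g1 x else - ((G2 x - G1 x) / 2) * g2 x.

Definition ODE (v : R) (g1 g2 G1 G2 H1 H2 : R -> R) : Prop := forall x : R,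
  - v * G1 x + ((G2 x - G1 x) / 2 * g1 x + (g2 x - g1 x) / 2 * G1 x) - H1 x = - Fr g1 g2 G1 G2 x /\
  - v * G2 x - ((G2 x - G1 x) / 2 * g2 x + (g2 x - g1 x) / 2 * G2 x) - H2 x = Fr g1 g2 G1 G2 x.

Section Bridge.
Variables (v : R) (g1 g2 G1 G2 H1 H2 : R -> R).
Hypotheses (D1 : forall x : R, is_derive g1 x (G1 x)) (D2 : forall x : R, is_derive g2 x (G2 x))
  (E1 : forall x : R, is_derive G1 x (H1 x)) (E2 : forall x : R, is_derive G2 x (H2 x)).
Let c1 := fun t y => g1 (y - v * t).
Let c2 := fun t y => g2 (y - v * t).

Lemma B_dt (g G : R -> R) (HD : forall x : R, is_derive g x (G x)) t y :
  d_t (fun t y => g (y - v * t)) t y = - v * G (y - v * t).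
Proof.
  unfold d_t. apply is_derive_unique. eapply Deq. apply (Dcomp g (fun s => y - v * s) t (G (y - v * t)) (- v)). apply HD.
  eapply Deq. apply (Dminus (fun _ => y) (fun s => v * s)). apply Dconst. apply Dscal, Did. ring. ring.
Qed.

Lemma B_dyy (g G H : R -> R) (HD : forall x : R, is_derive g x (G x)) (HE : forall x : R, is_derive G x (H x)) t y :
  d_yy (fun t y => g (y - v * t)) t y = H (y - v * t).
Proof.
  unfold d_yy. simpl. 
  rewrite (Derive_ext _ (fun z => G (z - v * t))).
  apply is_derive_unique. apply Dshift. auto.
  intros z. apply is_derive_unique. apply Dshift. auto.
Qed.

Lemma B_du t y : d_y (u1 c1 c2) t y = (G2 (y - v * t) - G1 (y - v * t)) / 2.
Proof.
  unfold d_y, u1, c1, c2. apply is_derive_unique.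
  apply (Dext (fun z => / 2 * (g2 (z - v * t) - g1 (z - v * t)))). intros; simpl; field.
  eapply Deq. apply (Dscal (/2) (fun z => g2 (z - v * t) - g1 (z - v * t))).
  apply (Dminus (fun z => g2 (z - v * t)) (fun z => g1 (z - v * t))); apply Dshift; auto. field.
Qed.

Lemma B_f1 t y : d_y (fun t z => u1 c1 c2 t z * c1 t z) t y =
  (G2 (y - v * t) - G1 (y - v * t)) / 2 * g1 (y - v * t) + (g2 (y - v * t) - g1 (y - v * t)) / 2 * G1 (y - v * t).
Proof.
  unfold d_y, u1, c1, c2. apply is_derive_unique.
  apply (Dmult (fun z => (g2 (z - v * t) - g1 (z - v * t)) / 2) (fun z => g1 (z - v * t))).
  2: apply Dshift; auto.
  apply (Dext (fun z => / 2 * (g2 (z - v * t) - g1 (z - v * t)))). intros; simpl; field.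
  eapply Deq. apply (Dscal (/2) (fun z => g2 (z - v * t) - g1 (z - v * t))).
  apply (Dminus (fun z => g2 (z - v * t)) (fun z => g1 (z - v * t))); apply Dshift; auto. field.
Qed.

Lemma B_f2 t y : d_y (fun t z => u2 c1 c2 t z * c2 t z) t y =
  - ((G2 (y - v * t) - G1 (y - v * t)) / 2 * g2 (y - v * t) + (g2 (y - v * t) - g1 (y - v * t)) / 2 * G2 (y - v * t)).
Proof.
  unfold d_y, u2, u1, c1, c2. apply is_derive_unique.
  eapply Deq.
  apply (Dmult (fun z => - ((g2 (z - v * t) - g1 (z - v * t)) / 2)) (fun z => g2 (z - v * t))).
  2: apply Dshift; auto.
  apply (Dext (fun z => (- / 2) * (g2 (z - v * t) - g1 (z - v * t)))). intros; simpl; field.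
  apply (Dscal (-/2) (fun z => g2 (z - v * t) - g1 (z - v * t))).
  apply (Dminus (fun z => g2 (z - v * t)) (fun z => g1 (z - v * t))); apply Dshift; auto. simpl; field.
Qed.

Lemma B_reac t y : reaction c1 c2 t y = Fr g1 g2 G1 G2 (y - v * t).
Proof.
  unfold reaction. rewrite B_du. unfold Fr, c1, c2. reflexivity.
Qed.

Lemma reg1 (g G H : R -> R) (HD : forall x : R, is_derive g x (G x)) (HE : forall x : R, is_derive G x (H x)) :
  classical_regular (fun t y => g (y - v * t)).
Proof.
  intros t _. split; [|split].
  - intros y. eexists. eapply Deq. apply (Dcomp g (fun s => y - v * s) t (G (y - v * t)) (- v)). apply HD.
    eapply Deq. apply (Dminus (fun _ => y) (fun s => v * s)). apply Dconst. apply Dscal, Did. ring. reflexivity.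
  - intros y. eexists. apply Dshift. auto.
  - intros y. apply (ex_derive_ext (fun z => G (z - v * t))).
    intros z. symmetry. apply is_derive_unique. apply Dshift. auto.
    eexists. apply Dshift. auto.
Qed.

Lemma TFE_of_ode : ODE v g1 g2 G1 G2 H1 H2 -> TFE_solution c1 c2.
Proof.
  intros HO. split; [apply (reg1 g1 G1 H1); auto|split; [apply (reg1 g2 G2 H2); auto|]].
  intros t y _. unfold c1, c2.
  rewrite (B_dt g1 G1 D1), (B_dt g2 G2 D2), (B_dyy g1 G1 H1 D1 E1), (B_dyy g2 G2 H2 D2 E2).
  fold c1 c2. rewrite B_f1, B_f2, B_reac. destruct (HO (y - v * t)) as [O1 O2]. split; lra.
Qed.

Lemma ode_of_TFE0 : TFE_solution c1 c2 -> ODE v g1 g2 G1 G2 H1 H2.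
Proof.
  intros [_ [_ HT]] x. destruct (HT 0 x (Rle_refl 0)) as [T1 T2].
  unfold c1, c2 in T1, T2.
  rewrite (B_dt g1 G1 D1), (B_dyy g1 G1 H1 D1 E1) in T1.
  rewrite (B_dt g2 G2 D2), (B_dyy g2 G2 H2 D2 E2) in T2.
  fold c1 c2 in T1, T2. rewrite B_f1, B_reac in T1. rewrite B_f2, B_reac in T2.
  replace (x - v * 0) with x in * by ring. split; lra.
Qed.
End Bridge.

Lemma ode_of_TFE v (g1 g2 : R -> R) : TFE_solution (fun t y => g1 (y - v * t)) (fun t y => g2 (y - v * t)) ->
  exists G1 G2 H1 H2 : R -> R, (forall x : R, is_derive g1 x (G1 x)) /\ (forall x : R, is_derive g2 x (G2 x)) /\
    (forall x : R, is_derive G1 x (H1 x)) /\ (forall x : R, is_derive G2 x (H2 x)) /\ ODE v g1 g2 G1 G2 H1 H2.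
Proof.
  intros HT. destruct HT as [R1 [R2 HT']].
  destruct (R1 0 (Rle_refl 0)) as [_ [R1b R1c]]. destruct (R2 0 (Rle_refl 0)) as [_ [R2b R2c]].
  assert (X1 : forall y, ex_derive g1 y).
  { intros y. apply (ex_derive_ext (fun z => g1 (z - v * 0))). intros; f_equal; ring. apply R1b. }
  assert (X2 : forall y, ex_derive g2 y).
  { intros y. apply (ex_derive_ext (fun z => g2 (z - v * 0))). intros; f_equal; ring. apply R2b. }
  assert (Y1 : forall y, ex_derive (Derive g1) y).
  { intros y. apply (ex_derive_ext (Derive (fun z => g1 (z - v * 0)))).
    intros; apply Derive_ext; intros; f_equal; ring. apply R1c. }
  assert (Y2 : forall y, ex_derive (Derive g2) y).
  { intros y. apply (ex_derive_ext (Derive (fun z => g2 (z - v * 0)))).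
    intros; apply Derive_ext; intros; f_equal; ring. apply R2c. }
  exists (Derive g1), (Derive g2), (Derive (Derive g1)), (Derive (Derive g2)).
  assert (D1 : forall x : R, is_derive g1 x (Derive g1 x)) by (intros; apply Derive_correct, X1).
  assert (D2 : forall x : R, is_derive g2 x (Derive g2 x)) by (intros; apply Derive_correct, X2).
  assert (E1 : forall x : R, is_derive (Derive g1) x (Derive (Derive g1) x)) by (intros; apply Derive_correct, Y1).
  assert (E2 : forall x : R, is_derive (Derive g2) x (Derive (Derive g2) x)) by (intros; apply Derive_correct, Y2).
  split; [exact D1|split; [exact D2|split; [exact E1|split; [exact E2|]]]].
  apply (ode_of_TFE0 v g1 g2 _ _ _ _ D1 D2 E1 E2). exact (conj R1 (conj R2 HT')).
Qed.

Definition RS (m : R) (sg d z : R -> R) : Prop :=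
  (forall x : R, is_derive sg x (m * sg x - d x ^ 2 / 2)) /\ (forall x : R, is_derive d x (z x)) /\
  (forall x : R, is_derive z x (m * z x + d x / 2 * (Rabs (z x) - (m * sg x - d x ^ 2 / 2)))).

Lemma RS_neg m sg d z : RS m sg d z -> RS m sg (fun x => - d x) (fun x => - z x).
Proof.
  intros [H1 [H2 H3]]. split; [|split].
  - intros x. eapply Deq. apply H1. simpl; field.
  - intros x. apply Dopp, H2.
  - intros x. eapply Deq. apply Dopp, H3. rewrite Rabs_Ropp. field.
Qed.

Lemma Drefl (f f' : R -> R) (x : R) : (forall y : R, is_derive f y (f' y)) -> is_derive (fun y => f (- y)) x (- f' (- x)).
Proof.
  intros H. eapply Deq. apply (Dcomp f (fun y => - y) x (f' (- x)) (-1)). apply H.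
  eapply Deq. apply Dopp, Did. ring. ring.
Qed.

Section Wave.
Variables (v : R) (g1 g2 G1 G2 H1 H2 : R -> R).
Hypotheses (D1 : forall x : R, is_derive g1 x (G1 x)) (D2 : forall x : R, is_derive g2 x (G2 x))
  (E1 : forall x : R, is_derive G1 x (H1 x)) (E2 : forall x : R, is_derive G2 x (H2 x))
  (HO : ODE v g1 g2 G1 G2 H1 H2).

Lemma Kconst : forall x y : R,
  - v * (g1 x + g2 x) - (g2 x - g1 x) ^ 2 / 2 - (G1 x + G2 x) =
  - v * (g1 y + g2 y) - (g2 y - g1 y) ^ 2 / 2 - (G1 y + G2 y).
Proof.
  apply (const_zero (fun x => - v * (g1 x + g2 x) - (g2 x - g1 x) ^ 2 / 2 - (G1 x + G2 x))).
  intros x. destruct (HO x) as [O1 O2].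
  eapply Deq. apply (Dminus (fun x => - v * (g1 x + g2 x) - (g2 x - g1 x) ^ 2 / 2) (fun x => G1 x + G2 x)).
  apply (Dminus (fun x => - v * (g1 x + g2 x)) (fun x => (g2 x - g1 x) ^ 2 / 2)).
  apply Dscal. apply Dplus; auto. apply (Dsqh (fun x => g2 x - g1 x)). apply Dminus; auto.
  apply Dplus; auto. simpl. lra.
Qed.

Lemma zeq x : H2 x - H1 x = - v * (G2 x - G1 x) - (g2 x - g1 x) * (G1 x + G2 x) / 2
   + Rabs (G2 x - G1 x) * (g2 x - g1 x) / 2.
Proof.
  destruct (HO x) as [O1 O2]. unfold Fr in O1, O2.
  destruct (Rle_dec ((G2 x - G1 x) / 2) 0) as [Hle|Hgt].
  - rewrite Rabs_left1 by lra. lra.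
  - rewrite Rabs_right by lra. lra.
Qed.

Lemma wave_left : is_lim g1 m_infty (-1) -> is_lim g2 m_infty (-1) ->
  RS (- v) (fun x => g1 x + g2 x + 2) (fun x => g2 x - g1 x) (fun x => G2 x - G1 x).
Proof.
  intros L1 L2.
  set (K0 := - v * (g1 0 + g2 0) - (g2 0 - g1 0) ^ 2 / 2 - (G1 0 + G2 0)).
  assert (HK : forall x, G1 x + G2 x = - v * (g1 x + g2 x) - (g2 x - g1 x) ^ 2 / 2 - K0).
  { intros x. unfold K0. rewrite <- (Kconst x 0). ring. }
  assert (Ls : is_lim (fun x => g1 x + g2 x) m_infty (-2)).
  { eapply L_eq. apply L_plus; eauto. ring. }
  assert (Ld : is_lim (fun x => g2 x - g1 x) m_infty 0).
  { eapply L_eq. apply L_minus; eauto. ring. }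
  assert (Lsp : is_lim (fun x => G1 x + G2 x) m_infty (2 * v - K0)).
  { apply (L_ext (fun x => - v * (g1 x + g2 x) - / 2 * ((g2 x - g1 x) * (g2 x - g1 x)) - K0)).
    intros; rewrite HK; simpl; field.
    eapply L_eq. apply (L_minus _ (fun _ => K0)). apply (L_minus (fun x => - v * (g1 x + g2 x))).
    apply L_scal, Ls. apply L_scal, L_mult; apply Ld. apply L_const. ring. }
  assert (E := derlimM (fun x => g1 x + g2 x) (fun x => G1 x + G2 x) _ _ (fun x => Dplus _ _ _ _ _ (D1 x) (D2 x)) Ls Lsp).
  split; [|split].
  - intros x. eapply Deq. apply (Dplus (fun x => g1 x + g2 x) (fun _ => 2)). apply Dplus; auto. apply Dconst.
    rewrite HK. assert (K0 = 2 * v) by lra. rewrite H. ring.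
  - intros x. apply Dminus; auto.
  - intros x. eapply Deq. apply Dminus; auto. rewrite zeq. rewrite HK. assert (K0 = 2 * v) by lra. rewrite H. simpl. field.
Qed.

Lemma wave_right : is_lim g1 p_infty 1 -> is_lim g2 p_infty 1 ->
  RS v (fun x => 2 - (g1 (- x) + g2 (- x))) (fun x => g2 (- x) - g1 (- x)) (fun x => - (G2 (- x) - G1 (- x))).
Proof.
  intros L1 L2.
  set (K0 := - v * (g1 0 + g2 0) - (g2 0 - g1 0) ^ 2 / 2 - (G1 0 + G2 0)).
  assert (HK : forall x, G1 x + G2 x = - v * (g1 x + g2 x) - (g2 x - g1 x) ^ 2 / 2 - K0).
  { intros x. unfold K0. rewrite <- (Kconst x 0). ring. }
  assert (Ls : is_lim (fun x => g1 x + g2 x) p_infty 2).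
  { eapply L_eq. apply L_plus; eauto. ring. }
  assert (Ld : is_lim (fun x => g2 x - g1 x) p_infty 0).
  { eapply L_eq. apply L_minus; eauto. ring. }
  assert (Lsp : is_lim (fun x => G1 x + G2 x) p_infty (- 2 * v - K0)).
  { apply (L_ext (fun x => - v * (g1 x + g2 x) - / 2 * ((g2 x - g1 x) * (g2 x - g1 x)) - K0)).
    intros; rewrite HK; simpl; field.
    eapply L_eq. apply (L_minus _ (fun _ => K0)). apply (L_minus (fun x => - v * (g1 x + g2 x))).
    apply L_scal, Ls. apply L_scal, L_mult; apply Ld. apply L_const. ring. }
  assert (E := derlimP (fun x => g1 x + g2 x) (fun x => G1 x + G2 x) _ _ (fun x => Dplus _ _ _ _ _ (D1 x) (D2 x)) Ls Lsp).
  assert (HK0 : K0 = - 2 * v) by lra.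
  split; [|split].
  - intros x. eapply Deq. apply (Dminus (fun _ => 2) (fun x => g1 (- x) + g2 (- x))). apply Dconst.
    apply (Drefl (fun x => g1 x + g2 x) (fun x => G1 x + G2 x)). intros; apply Dplus; auto.
    rewrite HK, HK0. simpl. field.
  - intros x. apply (Drefl (fun x => g2 x - g1 x) (fun x => G2 x - G1 x)). intros; apply Dminus; auto.
  - intros x. eapply Deq. apply Dopp. apply (Drefl (fun x => G2 x - G1 x) (fun x => H2 x - H1 x)). intros; apply Dminus; auto.
    rewrite zeq. rewrite HK, HK0. rewrite Rabs_Ropp. simpl. field.
Qed.
End Wave.

Lemma speed_rel (m : R) (sg d z : R -> R) (sp dl : R) : RS m sg d z -> is_lim sg p_infty sp -> is_lim d p_infty dl -> m * sp = dl ^ 2 / 2.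
Proof.
  intros [H1 _] Ls Ld.
  assert (L : is_lim (fun x => m * sg x - d x ^ 2 / 2) p_infty (m * sp - dl ^ 2 / 2)).
  { apply (L_ext (fun x => m * sg x - / 2 * (d x * d x))). intros; simpl; field.
    apply (L_eq _ _ (m * sp - / 2 * (dl * dl))). apply (L_minus (fun x => m * sg x)). apply (L_scal sg p_infty m sp Ls). apply L_scal, L_mult; auto. simpl; field. }
  assert (E := derlimP sg _ sp _ H1 Ls L). lra.
Qed.

Lemma m0_case (sg d z : R -> R) (sp : R) : RS 0 sg d z -> is_lim sg m_infty 0 -> is_lim sg p_infty sp -> sp <= 0.
Proof.
  intros [H1 _] L0 L1.
  assert (Hm : forall x y, x <= y -> (fun x => - sg x) x <= (fun x => - sg x) y).
  { apply (mono (fun x => - sg x) (fun x => - (0 * sg x - d x ^ 2 / 2))). intros; apply Dopp, H1.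
    intros x. assert (0 <= d x ^ 2) by apply pow2_ge_0. lra. }
  assert (A1 := nondecr_limM (fun x => - sg x) 0 Hm). assert (A2 := nondecr_limP (fun x => - sg x) (- sp) Hm).
  assert (L0' : is_lim (fun x => - sg x) m_infty 0).
  { apply (L_ext (fun x => -1 * sg x)). intros; simpl; ring. apply (L_eq _ _ (-1 * 0)). apply L_scal; auto. ring. }
  assert (L1' : is_lim (fun x => - sg x) p_infty (- sp)).
  { apply (L_ext (fun x => -1 * sg x)). intros; simpl; ring. apply (L_eq _ _ (-1 * sp)). apply L_scal; auto. ring. }
  assert (B1 := A1 L0' 0). assert (B2 := A2 L1' 0). simpl in B1, B2. lra.
Qed.

Definition phi (y : R) : R := / (1 + exp (- y)).

Lemma phi_bounds y : 0 < phi y < 1.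
Proof.
  unfold phi. assert (0 < exp (- y)) by apply exp_pos. split.
  apply Rinv_0_lt_compat; lra.
  rewrite <- Rinv_1. apply Rinv_lt_contravar; lra.
Qed.

Lemma phi_neg y : phi (- y) = 1 - phi y.
Proof.
  unfold phi. rewrite Ropp_involutive. rewrite exp_Ropp.
  assert (0 < exp y) by apply exp_pos. field. split; lra.
Qed.

Lemma phi0 : phi 0 = / 2.
Proof. unfold phi. rewrite Ropp_0, exp_0. field. Qed.

Lemma dphi (y : R) : is_derive phi y (phi y * (1 - phi y)).
Proof.
  unfold phi. auto_derive. assert (0 < exp (- y)) by apply exp_pos. lra.
  assert (0 < exp (- y)) by apply exp_pos. field. lra.
Qed.

Lemma frac_le E : 0 <= E -> E / (1 + E) <= E.
Proof.
  intros H. unfold Rdiv. apply Rle_trans with (E * 1); [|lra].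
  apply Rmult_le_compat_l; [lra|]. rewrite <- Rinv_1. apply Rinv_le_contravar; lra.
Qed.

Lemma phi_limP : is_lim phi p_infty 1.
Proof.
  apply eps_LP. intros e He. exists (- ln e + 1). intros x Hx.
  assert (0 < exp (- x)) by apply exp_pos.
  assert (exp (- x) < e). { rewrite <- (exp_ln e He). apply exp_increasing. lra. }
  unfold phi. replace (/ (1 + exp (- x)) - 1) with (- (exp (- x) / (1 + exp (- x)))) by (field; lra).
  rewrite Rabs_Ropp. rewrite Rabs_right.
  apply Rle_lt_trans with (exp (- x)); auto. apply frac_le; lra.
  apply Rle_ge. unfold Rdiv. apply Rmult_le_pos. lra. left; apply Rinv_0_lt_compat; lra.
Qed.

Lemma phi_limM : is_lim phi m_infty 0.
Proof.
  apply eps_LM. intros e He. exists (ln e - 1). intros x Hx.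
  assert (0 < exp x) by apply exp_pos.
  assert (exp x < e). { rewrite <- (exp_ln e He). apply exp_increasing. lra. }
  unfold phi. rewrite exp_Ropp. replace (/ (1 + / exp x) - 0) with (exp x / (exp x + 1)) by (field; lra).
  rewrite Rabs_right.
  apply Rle_lt_trans with (exp x); auto. rewrite Rplus_comm. apply frac_le; lra.
  apply Rle_ge. unfold Rdiv. apply Rmult_le_pos. lra. left; apply Rinv_0_lt_compat; lra.
Qed.

Lemma lim_quarterP (f : R -> R) (L : R) : is_lim f p_infty L -> is_lim (fun x => f (x / 4)) p_infty L.
Proof.
  intros H. apply eps_LP. intros e He. destruct (LP_eps f L H e He) as [M HM]. exists (4 * M).
  intros x Hx. apply HM. lra.
Qed.
Lemma lim_quarterM (f : R -> R) (L : R) : is_lim f m_infty L -> is_lim (fun x => f (x / 4)) m_infty L.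
Proof.
  intros H. apply eps_LM. intros e He. destruct (LM_eps f L H e He) as [M HM]. exists (4 * M).
  intros x Hx. apply HM. lra.
Qed.

Lemma LOG (d : R -> R) : (forall x : R, is_derive d x (d x * (/ 4 + d x / 4))) ->
  is_lim d m_infty 0 -> is_lim d p_infty (-1) -> exists c, forall x, d x = - phi (x / 4 + c).
Proof.
  intros HD L0 L1.
  destruct (LM_eps d 0 L0 (/4)) as [Ma HMa]. lra.
  destruct (LP_eps d (-1) L1 (/4)) as [Mb HMb]. lra.
  set (xa := Rmin Ma Mb - 1). set (xb := Rmax Ma Mb + 1).
  assert (Hxa : xa <= Ma) by (unfold xa; assert (Rmin Ma Mb <= Ma) by apply Rmin_l; lra).
  assert (Hxb : Mb <= xb) by (unfold xb; assert (Mb <= Rmax Ma Mb) by apply Rmax_r; lra).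
  assert (Hab : xa < xb) by (unfold xa, xb; assert (Rmin Ma Mb <= Ma) by apply Rmin_l; assert (Ma <= Rmax Ma Mb) by apply Rmax_l; lra).
  assert (Ha := HMa xa Hxa). assert (Hb := HMb xb Hxb). apply abs_lt in Ha. apply abs_lt in Hb.
  assert (Hcont : continuity (fun x => - (d x + / 2))).
  { intros x. apply (deriv_cont _ x (- (d x * (/ 4 + d x / 4) + 0))). apply Dopp. apply Dplus. apply HD. apply Dconst. }
  destruct (IVT (fun x => - (d x + / 2)) xa xb Hcont Hab) as [x0 [_ Hx0]]. lra. lra.
  exists (- x0 / 4).
  destruct (bounded_fun d (-1) 0) as [D [HD0 HDb]]; auto. intros x; eapply deriv_cont; apply HD.
  set (P := fun x => - phi (x / 4 + - x0 / 4)).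
  assert (HP : forall x : R, is_derive P x (P x * (/ 4 + P x / 4))).
  { intros x. unfold P. eapply Deq. apply Dopp. apply (Dcomp phi (fun x => x / 4 + - x0 / 4) x (phi (x / 4 + - x0 / 4) * (1 - phi (x / 4 + - x0 / 4))) (/ 4)). apply dphi.
    apply (Dext (fun x => / 4 * x + - x0 / 4)). intros; simpl; field.
    eapply Deq. apply Dplus. apply Dscal, Did. apply Dconst. ring. simpl. field. }
  set (V := fun x => (d x - P x) ^ 2).
  set (V' := fun x => 2 * (d x - P x) * (d x * (/ 4 + d x / 4) - P x * (/ 4 + P x / 4))).
  assert (HV : forall x : R, is_derive V x (V' x)). { intros x. unfold V, V'. eapply Deq. apply (Dsq (fun y => d y - P y)). apply Dminus; [apply HD|apply HP]. simpl. ring. }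
  assert (HVp : forall x, 0 <= V x) by (intros; apply pow2_ge_0).
  assert (HK : forall x, Rabs (V' x) <= (2 + D) * V x).
  { intros x. unfold V', V. specialize (HDb x). apply abs_le in HDb. assert (Hp := phi_bounds (x / 4 + - x0 / 4)).
    fold (P x) in *. assert (-1 < P x < 0) by (unfold P; lra).
    replace (2 * (d x - P x) * (d x * (/ 4 + d x / 4) - P x * (/ 4 + P x / 4))) with
      ((d x - P x) ^ 2 * ((1 + d x + P x) / 2)) by (simpl; field).
    rewrite Rabs_mult. rewrite (Rabs_right ((d x - P x) ^ 2)) by (apply Rle_ge, pow2_ge_0).
    rewrite Rmult_comm. apply Rmult_le_compat_r. apply pow2_ge_0.
    apply le_abs. split; lra. }
  assert (HV0 : V x0 = 0).
  { unfold V, P. replace (x0 / 4 + - x0 / 4) with 0 by field. rewrite phi0. assert (Hd0 : d x0 = - / 2) by (simpl in Hx0; lra). rewrite Hd0. ring. }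
  intros x. assert (E := gronwall V V' _ x0 HV HVp HK HV0 x). unfold V in E. apply sq0 in E.
  unfold P in E. lra.
Qed.

Definition Phi (x : R) : R := phi (x / 4).
Definition psi (x : R) : R := Phi x * (1 - Phi x) / 4.
Definition psi' (x : R) : R := (1 - 2 * Phi x) * psi x / 4.

Lemma dPhi (x : R) : is_derive Phi x (psi x).
Proof.
  unfold Phi, psi. eapply Deq. apply (Dcomp phi (fun x => x / 4) x (phi (x / 4) * (1 - phi (x / 4))) (/ 4)).
  apply dphi. apply (Dext (fun x => / 4 * x)). intros; simpl; field. eapply Deq. apply Dscal, Did. lra. simpl; unfold Phi; field.
Qed.

Lemma dpsi (x : R) : is_derive psi x (psi' x).
Proof.
  unfold psi', psi. apply (Dext (fun x => / 4 * (Phi x * (1 - Phi x)))). intros; simpl; field.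
  eapply Deq. apply Dscal. apply (Dmult Phi (fun x => 1 - Phi x)). apply dPhi. apply Dminus. apply Dconst. apply dPhi.
  unfold psi. simpl. field.
Qed.

Lemma dprof (a b x : R) : is_derive (fun x => a + b * Phi x) x (b * psi x).
Proof. eapply Deq. apply Dplus. apply Dconst. apply Dscal, dPhi. field. Qed.
Lemma dprof' (b x : R) : is_derive (fun x => b * psi x) x (b * psi' x).
Proof. apply Dscal, dpsi. Qed.

Lemma Phi_bounds x : 0 < Phi x < 1.
Proof. apply phi_bounds. Qed.

Lemma TFE_prof (v a1 b1 a2 b2 : R) :
  ODE v (fun x => a1 + b1 * Phi x) (fun x => a2 + b2 * Phi x) (fun x => b1 * psi x) (fun x => b2 * psi x)
    (fun x => b1 * psi' x) (fun x => b2 * psi' x) ->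
  TFE_solution (fun t y => a1 + b1 * Phi (y - v * t)) (fun t y => a2 + b2 * Phi (y - v * t)).
Proof.
  intros HO. apply (TFE_of_ode v (fun x => a1 + b1 * Phi x) (fun x => a2 + b2 * Phi x)
    (fun x => b1 * psi x) (fun x => b2 * psi x) (fun x => b1 * psi' x) (fun x => b2 * psi' x)); auto.
  all: intros; first [apply dprof | apply dprof'].
Qed.

Lemma ode_left (v a1 b1 a2 b2 : R) : b2 - b1 < 0 ->
  (forall F, 0 < F < 1 ->
    - v * (b1 * (F * (1 - F) / 4)) + ((b2 * (F * (1 - F) / 4) - b1 * (F * (1 - F) / 4)) / 2 * (a1 + b1 * F) + (a2 + b2 * F - (a1 + b1 * F)) / 2 * (b1 * (F * (1 - F) / 4))) - b1 * ((1 - 2 * F) * (F * (1 - F) / 4) / 4) = - (- ((b2 * (F * (1 - F) / 4) - b1 * (F * (1 - F) / 4)) / 2) * (a1 + b1 * F)) /\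
    - v * (b2 * (F * (1 - F) / 4)) - ((b2 * (F * (1 - F) / 4) - b1 * (F * (1 - F) / 4)) / 2 * (a2 + b2 * F) + (a2 + b2 * F - (a1 + b1 * F)) / 2 * (b2 * (F * (1 - F) / 4))) - b2 * ((1 - 2 * F) * (F * (1 - F) / 4) / 4) = - ((b2 * (F * (1 - F) / 4) - b1 * (F * (1 - F) / 4)) / 2) * (a1 + b1 * F)) ->
  ODE v (fun x => a1 + b1 * Phi x) (fun x => a2 + b2 * Phi x) (fun x => b1 * psi x) (fun x => b2 * psi x)
    (fun x => b1 * psi' x) (fun x => b2 * psi' x).
Proof.
  intros Hb H x. unfold Fr, psi', psi. assert (HF := Phi_bounds x).
  destruct (Rle_dec _ 0) as [Hle|Hgt].
  - apply H; auto.
  - exfalso. apply Hgt. set (F := Phi x) in *.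
    assert (0 < F * (1 - F) / 4). { unfold Rdiv. apply Rmult_lt_0_compat. apply Rmult_lt_0_compat; lra. lra. }
    replace ((b2 * (F * (1 - F) / 4) - b1 * (F * (1 - F) / 4)) / 2) with ((b2 - b1) * (F * (1 - F) / 4) / 2) by field.
    assert (0 < (b1 - b2) * (F * (1 - F) / 4)) by (apply Rmult_lt_0_compat; lra). lra.
Qed.

Lemma ode_right (v a1 b1 a2 b2 : R) : 0 < b2 - b1 ->
  (forall F, 0 < F < 1 ->
    - v * (b1 * (F * (1 - F) / 4)) + ((b2 * (F * (1 - F) / 4) - b1 * (F * (1 - F) / 4)) / 2 * (a1 + b1 * F) + (a2 + b2 * F - (a1 + b1 * F)) / 2 * (b1 * (F * (1 - F) / 4))) - b1 * ((1 - 2 * F) * (F * (1 - F) / 4) / 4) = - (- ((b2 * (F * (1 - F) / 4) - b1 * (F * (1 - F) / 4)) / 2) * (a2 + b2 * F)) /\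
    - v * (b2 * (F * (1 - F) / 4)) - ((b2 * (F * (1 - F) / 4) - b1 * (F * (1 - F) / 4)) / 2 * (a2 + b2 * F) + (a2 + b2 * F - (a1 + b1 * F)) / 2 * (b2 * (F * (1 - F) / 4))) - b2 * ((1 - 2 * F) * (F * (1 - F) / 4) / 4) = - ((b2 * (F * (1 - F) / 4) - b1 * (F * (1 - F) / 4)) / 2) * (a2 + b2 * F)) ->
  ODE v (fun x => a1 + b1 * Phi x) (fun x => a2 + b2 * Phi x) (fun x => b1 * psi x) (fun x => b2 * psi x)
    (fun x => b1 * psi' x) (fun x => b2 * psi' x).
Proof.
  intros Hb H x. unfold Fr, psi', psi. assert (HF := Phi_bounds x).
  destruct (Rle_dec _ 0) as [Hle|Hgt].
  - exfalso. set (F := Phi x) in *.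
    assert (0 < F * (1 - F) / 4). { unfold Rdiv. apply Rmult_lt_0_compat. apply Rmult_lt_0_compat; lra. lra. }
    replace ((b2 * (F * (1 - F) / 4) - b1 * (F * (1 - F) / 4)) / 2) with ((b2 - b1) * (F * (1 - F) / 4) / 2) in Hle by field.
    assert (0 < (b2 - b1) * (F * (1 - F) / 4)) by (apply Rmult_lt_0_compat; lra). lra.
  - apply H; auto.
Qed.

Definition pp1 (x : R) : R := -1 + 3/2 * Phi x.
Definition pp2 (x : R) : R := -1 + 1/2 * Phi x.
Definition qq1 (x : R) : R := 1/2 + 1/2 * Phi x.
Definition qq2 (x : R) : R := -1/2 + 3/2 * Phi x.

Lemma stat (a b : R) : stationary (a, b).
Proof.
  unfold stationary. simpl.
  apply (TFE_of_ode 0 (fun _ => a) (fun _ => b) (fun _ => 0) (fun _ => 0) (fun _ => 0) (fun _ => 0)).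
  all: try (intros; apply Dconst).
  intros x. unfold Fr. destruct (Rle_dec _ 0); split; field.
Qed.

Lemma limPhiM : is_lim Phi m_infty 0.
Proof. apply (lim_quarterM phi 0 phi_limM). Qed.
Lemma limPhiP : is_lim Phi p_infty 1.
Proof. apply (lim_quarterP phi 1 phi_limP). Qed.

Lemma lim_prof (a b : R) : is_lim (fun x => a + b * Phi x) m_infty a /\ is_lim (fun x => a + b * Phi x) p_infty (a + b).
Proof.
  split.
  - apply (L_eq _ _ (a + b * 0)). apply L_plus. apply L_const. apply L_scal, limPhiM. field.
  - apply (L_eq _ _ (a + b * 1)). apply L_plus. apply L_const. apply L_scal, limPhiP. field.
Qed.

Lemma cont_prof (a b x : R) : continuous (fun x => a + b * Phi x) x.
Proof. apply (ex_derive_continuous (K := R_AbsRing) (V := R_NormedModule)). eexists. apply dprof. Qed.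

Lemma tw_prof (v a1 b1 a2 b2 : R) (gm gp : R * R) :
  fst gm = a1 -> snd gm = a2 -> fst gp = a1 + b1 -> snd gp = a2 + b2 ->
  ODE v (fun x => a1 + b1 * Phi x) (fun x => a2 + b2 * Phi x) (fun x => b1 * psi x) (fun x => b2 * psi x)
    (fun x => b1 * psi' x) (fun x => b2 * psi' x) ->
  traveling_wave (fun x => a1 + b1 * Phi x) (fun x => a2 + b2 * Phi x) v gm gp.
Proof.
  intros E1 E2 E3 E4 HO. destruct (lim_prof a1 b1) as [A1 A2]. destruct (lim_prof a2 b2) as [B1 B2].
  split; [intros; apply cont_prof|split; [intros; apply cont_prof|]].
  rewrite E1, E2, E3, E4. split; auto. split; auto. split; auto. split; auto.
  apply TFE_prof; auto.
Qed.

Lemma terrace_p : terrace2 (-1, -1) (1/2, -1/2) (1, 1) (-1/4) (1/4) pp1 pp2 qq1 qq2.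
Proof.
  split; [apply stat|split; [apply stat|split; [apply stat|]]].
  split; [|split; [|lra]].
  - apply (tw_prof (-1/4) (-1) (3/2) (-1) (1/2)); simpl; try field.
    apply ode_left. lra. intros F HF. split; field.
  - apply (tw_prof (1/4) (1/2) (1/2) (-1/2) (3/2)); simpl; try field.
    apply ode_right. lra. intros F HF. split; field.
Qed.

Lemma terrace_r : terrace2 (-1, -1) (-1/2, 1/2) (1, 1) (-1/4) (1/4) pp2 pp1 qq2 qq1.
Proof.
  split; [apply stat|split; [apply stat|split; [apply stat|]]].
  split; [|split; [|lra]].
  - apply (tw_prof (-1/4) (-1) (1/2) (-1) (3/2)); simpl; try field.
    apply ode_right. lra. intros F HF. split; field.
  - apply (tw_prof (1/4) (-1/2) (3/2) (1/2) (1/2)); simpl; try field.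
    apply ode_left. lra. intros F HF. split; field.
Qed.

Lemma pos_speeds (m1 m2 a b : R) : b - a <> 0 -> m1 * (a + b + 2) = (b - a) ^ 2 / 2 ->
  m2 * (2 - (a + b)) = (b - a) ^ 2 / 2 -> 0 <= m1 + m2 -> 0 < m1 /\ 0 < m2.
Proof.
  intros Hd S1 S2 Hv. assert (Hq : 0 < (b - a) ^ 2 / 2). { assert (0 < (b - a) ^ 2) by (apply pow2_gt_0; auto). lra. }
  assert (m1 <> 0). { intros E; rewrite E in S1; lra. }
  assert (m2 <> 0). { intros E; rewrite E in S2; lra. }
  split.
  - destruct (Rlt_le_dec 0 m1) as [ok|Hn]; auto. exfalso.
    assert (m1 < 0) by lra. assert (a + b + 2 < 0) by nra. assert (0 < m2) by lra.
    assert (0 < 2 - (a + b)) by nra.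
    assert (m1 * (a + b + 2) = m2 * (2 - (a + b))) by lra.
    assert (m2 * (2 - (a + b)) >= - m1 * (2 - (a + b))) by nra. nra.
  - destruct (Rlt_le_dec 0 m2) as [ok|Hn]; auto. exfalso.
    assert (m2 < 0) by lra. assert (2 - (a + b) < 0) by nra. assert (0 < m1) by lra.
    assert (0 < a + b + 2) by nra.
    assert (m1 * (a + b + 2) = m2 * (2 - (a + b))) by lra.
    assert (m1 * (a + b + 2) >= - m2 * (a + b + 2)) by nra. nra.
Qed.

Lemma lim_neg (f : R -> R) x (a : R) : is_lim f x a -> is_lim (fun y => - f y) x (- a).
Proof. intros H. apply (L_ext (fun y => -1 * f y)). intros; simpl; ring. apply (L_eq _ _ (-1 * a)). apply L_scal; auto. ring. Qed.

Theorem uniq (a b v1 v2 : R) (g1 g2 h1 h2 : R -> R) :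
  terrace2 (-1, -1) (a, b) (1, 1) v1 v2 g1 g2 h1 h2 ->
  v1 = -1/4 /\ v2 = 1/4 /\
      (((a, b) = (1/2, -1/2) /\ same_up_to_translation pp1 pp2 g1 g2 /\
                            same_up_to_translation qq1 qq2 h1 h2) \/
       ((a, b) = (-1/2, 1/2) /\ same_up_to_translation pp2 pp1 g1 g2 /\
                            same_up_to_translation qq2 qq1 h1 h2)).
Proof.
  intros [_ [_ [_ [TW1 [TW2 Hv]]]]].
  destruct TW1 as [_ [_ [Lg1m [Lg2m [Lg1p [Lg2p HT1]]]]]]. cbn [fst snd] in Lg1m, Lg2m, Lg1p, Lg2p.
  destruct TW2 as [_ [_ [Lh1m [Lh2m [Lh1p [Lh2p HT2]]]]]]. cbn [fst snd] in Lh1m, Lh2m, Lh1p, Lh2p.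
  destruct (ode_of_TFE v1 g1 g2 HT1) as [G1 [G2 [H1 [H2 [D1 [D2 [E1 [E2 HO]]]]]]]].
  destruct (ode_of_TFE v2 h1 h2 HT2) as [K1 [K2 [J1 [J2 [F1 [F2 [I1 [I2 HO2]]]]]]]].
  assert (RS1 := wave_left v1 g1 g2 G1 G2 H1 H2 D1 D2 E1 E2 HO Lg1m Lg2m).
  assert (RS2 := wave_right v2 h1 h2 K1 K2 J1 J2 F1 F2 I1 I2 HO2 Lh1p Lh2p).
  set (sg1 := fun x => g1 x + g2 x + 2) in *. set (d1 := fun x => g2 x - g1 x) in *. set (z1 := fun x => G2 x - G1 x) in *.
  set (sg2 := fun x => 2 - (h1 (- x) + h2 (- x))) in *. set (d2 := fun x => h2 (- x) - h1 (- x)) in *.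
  set (z2 := fun x => - (K2 (- x) - K1 (- x))) in *.
  assert (Ls1m : is_lim sg1 m_infty 0).
  { apply (L_eq _ _ (-1 + -1 + 2)). apply (L_plus (fun x => g1 x + g2 x)). apply L_plus; auto. apply L_const. ring. }
  assert (Ls1p : is_lim sg1 p_infty (a + b + 2)).
  { apply (L_plus (fun x => g1 x + g2 x)). apply L_plus; auto. apply L_const. }
  assert (Ld1m : is_lim d1 m_infty 0). { apply (L_eq _ _ (-1 - -1)). apply L_minus; auto. ring. }
  assert (Ld1p : is_lim d1 p_infty (b - a)). { apply L_minus; auto. }
  assert (Ls2m : is_lim sg2 m_infty 0).
  { apply (L_eq _ _ (2 - (1 + 1))). apply (L_minus (fun _ => 2) (fun x => h1 (- x) + h2 (- x))). apply L_const.
    apply (L_refl_PM (fun x => h1 x + h2 x)). apply L_plus; auto. ring. }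
  assert (Ls2p : is_lim sg2 p_infty (2 - (a + b))).
  { apply (L_minus (fun _ => 2) (fun x => h1 (- x) + h2 (- x))). apply L_const.
    apply (L_refl_MP (fun x => h1 x + h2 x)). apply L_plus; auto. }
  assert (Ld2m : is_lim d2 m_infty 0).
  { apply (L_eq _ _ (1 - 1)). apply (L_refl_PM (fun x => h2 x - h1 x)). apply L_minus; auto. ring. }
  assert (Ld2p : is_lim d2 p_infty (b - a)).
  { apply (L_refl_MP (fun x => h2 x - h1 x)). apply L_minus; auto. }
  assert (SR1 := speed_rel _ _ _ _ _ _ RS1 Ls1p Ld1p).
  assert (SR2 := speed_rel _ _ _ _ _ _ RS2 Ls2p Ld2p).
  destruct (Req_dec (b - a) 0) as [Hd0|Hd0].
  { exfalso. rewrite Hd0 in SR1, SR2.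
    assert (P1 : a + b + 2 <= 0).
    { destruct (Req_dec v1 0) as [Hv0|Hv0].
      - rewrite Hv0 in RS1. replace (- 0) with 0 in RS1 by ring. exact (m0_case _ _ _ _ RS1 Ls1m Ls1p).
      - assert (- v1 <> 0) by lra. assert (a + b + 2 = 0).
        { assert (- v1 * (a + b + 2) = 0) by (rewrite SR1; simpl; field). apply Rmult_integral in H0. destruct H0; [lra|auto]. }
        lra. }
    assert (P2 : 2 - (a + b) <= 0).
    { destruct (Req_dec v2 0) as [Hv0|Hv0].
      - rewrite Hv0 in RS2. exact (m0_case _ _ _ _ RS2 Ls2m Ls2p).
      - assert (2 - (a + b) = 0).
        { assert (v2 * (2 - (a + b)) = 0) by (rewrite SR2; simpl; field). apply Rmult_integral in H. destruct H; [lra|auto]. }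
        lra. }
    lra. }
  destruct (pos_speeds (- v1) v2 a b Hd0 SR1 SR2 ltac:(lra)) as [Hm1 Hm2].
  destruct RS1 as [R1a [R1b R1c]]. destruct RS2 as [R2a [R2b R2c]].
  destruct (Rlt_le_dec (b - a) 0) as [Hneg|Hpos].
  -
    destruct (core (- v1) (b - a) (a + b + 2) sg1 d1 z1 Hm1 Hneg R1a R1b R1c Ls1m Ld1m Ls1p Ld1p) as [C1 [C2 C3]].
    destruct (core v2 (b - a) (2 - (a + b)) sg2 d2 z2 Hm2 Hneg R2a R2b R2c Ls2m Ld2m Ls2p Ld2p) as [C4 [C5 C6]].
    assert (Ev : v1 = -1/4 /\ v2 = 1/4 /\ a + b = 0).
    { assert (v2 = - v1) by lra. rewrite C1 in SR1. rewrite C4 in SR2.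
      assert (a + b + 2 = 8 * - v1). { apply (Rmult_eq_reg_l (- v1)). rewrite SR1. simpl; field. lra. }
      assert (2 - (a + b) = 8 * v2). { apply (Rmult_eq_reg_l v2). rewrite SR2. simpl; field. lra. }
      lra. }
    destruct Ev as [Ev1 [Ev2 Eab0]].
    assert (Eab : a = 1/2 /\ b = -1/2). { rewrite Ev1 in C1. lra. }
    destruct Eab as [Ea Eb].
    split; auto. split; auto. left. split. rewrite Ea, Eb; auto.
    split.
    + destruct (LOG d1) as [c Hc].
      { intros x. eapply Deq. apply R1b. rewrite C3, Ev1. field. }
      exact Ld1m. rewrite Ea, Eb in Ld1p. eapply L_eq. exact Ld1p. field.
      exists (4 * c). intros x. specialize (Hc x). specialize (C2 x). unfold sg1, d1 in *. unfold pp1, pp2, Phi.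
      replace ((x + 4 * c) / 4) with (x / 4 + c) by field. split; lra.
    + destruct (LOG d2) as [c Hc].
      { intros x. eapply Deq. apply R2b. rewrite C6, Ev2. field. }
      exact Ld2m. rewrite Ea, Eb in Ld2p. eapply L_eq. exact Ld2p. field.
      exists (- 4 * c). intros y. specialize (Hc (- y)). specialize (C5 (- y)). unfold sg2, d2 in *.
      rewrite Ropp_involutive in Hc, C5. unfold qq1, qq2, Phi.
      replace ((y + - 4 * c) / 4) with (- (- y / 4 + c)) by field. rewrite phi_neg.
      split; lra.
  -
    assert (Hneg : - (b - a) < 0) by lra.
    destruct (RS_neg _ _ _ _ (conj R1a (conj R1b R1c))) as [N1a [N1b N1c]].
    destruct (RS_neg _ _ _ _ (conj R2a (conj R2b R2c))) as [N2a [N2b N2c]].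
    destruct (core (- v1) (- (b - a)) (a + b + 2) sg1 _ _ Hm1 Hneg N1a N1b N1c Ls1m
      (L_eq _ _ (- 0) 0 (lim_neg _ _ _ Ld1m) ltac:(ring)) Ls1p (lim_neg _ _ _ Ld1p)) as [C1 [C2 C3]].
    destruct (core v2 (- (b - a)) (2 - (a + b)) sg2 _ _ Hm2 Hneg N2a N2b N2c Ls2m
      (L_eq _ _ (- 0) 0 (lim_neg _ _ _ Ld2m) ltac:(ring)) Ls2p (lim_neg _ _ _ Ld2p)) as [C4 [C5 C6]].
    assert (Ev : v1 = -1/4 /\ v2 = 1/4 /\ a + b = 0).
    { assert (Q0 : v2 = - v1) by lra. assert (Q1 : b - a = 4 * - v1) by lra. assert (Q2 : b - a = 4 * v2) by lra.
      rewrite Q1 in SR1. rewrite Q2 in SR2.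
      assert (a + b + 2 = 8 * - v1). { apply (Rmult_eq_reg_l (- v1)). rewrite SR1. simpl; field. lra. }
      assert (2 - (a + b) = 8 * v2). { apply (Rmult_eq_reg_l v2). rewrite SR2. simpl; field. lra. }
      lra. }
    destruct Ev as [Ev1 [Ev2 Eab0]].
    assert (Eab : a = -1/2 /\ b = 1/2). { rewrite Ev1 in C1. lra. }
    destruct Eab as [Ea Eb].
    split; auto. split; auto. right. split. rewrite Ea, Eb; auto.
    split.
    + destruct (LOG (fun x => - d1 x)) as [c Hc].
      { intros x. eapply Deq. apply N1b. rewrite C3, Ev1. field. }
      apply (L_eq _ _ _ _ (lim_neg _ _ _ Ld1m)). ring.
      rewrite Ea, Eb in Ld1p. apply (L_eq _ _ _ _ (lim_neg _ _ _ Ld1p)). field.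
      exists (4 * c). intros x. specialize (Hc x). specialize (C2 x). unfold sg1, d1 in *. unfold pp1, pp2, Phi.
      replace ((x + 4 * c) / 4) with (x / 4 + c) by field. split; lra.
    + destruct (LOG (fun x => - d2 x)) as [c Hc].
      { intros x. eapply Deq. apply N2b. rewrite C6, Ev2. field. }
      apply (L_eq _ _ _ _ (lim_neg _ _ _ Ld2m)). ring.
      rewrite Ea, Eb in Ld2p. apply (L_eq _ _ _ _ (lim_neg _ _ _ Ld2p)). field.
      exists (- 4 * c). intros y. specialize (Hc (- y)). specialize (C5 (- y)). unfold sg2, d2 in *.
      rewrite Ropp_involutive in Hc, C5. unfold qq1, qq2, Phi.
      replace ((y + - 4 * c) / 4) with (- (- y / 4 + c)) by field. rewrite phi_neg.
      split; lra.
Qed.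


Theorem theorem2 :
  exists (p1 p2 q1 q2 r1 r2 w1 w2 : R -> R),
    terrace2 (-1, -1) (1/2, -1/2) (1, 1) (-1/4) (1/4) p1 p2 q1 q2 /\
    terrace2 (-1, -1) (-1/2, 1/2) (1, 1) (-1/4) (1/4) r1 r2 w1 w2 /\
    forall (s1 : R * R) (v1 v2 : R) (g1 g2 h1 h2 : R -> R),
      terrace2 (-1, -1) s1 (1, 1) v1 v2 g1 g2 h1 h2 ->
      v1 = -1/4 /\ v2 = 1/4 /\
      ((s1 = (1/2, -1/2) /\ same_up_to_translation p1 p2 g1 g2 /\
                            same_up_to_translation q1 q2 h1 h2) \/
       (s1 = (-1/2, 1/2) /\ same_up_to_translation r1 r2 g1 g2 /\
                            same_up_to_translation w1 w2 h1 h2)).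
Proof.
  exists pp1, pp2, qq1, qq2, pp2, pp1, qq2, qq1.
  split. exact terrace_p. split. exact terrace_r.
  intros [a b] v1 v2 g1 g2 h1 h2 Ht. exact (uniq a b v1 v2 g1 g2 h1 h2 Ht).
Qed.
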